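(* Under the standing assumptions below: 1. If there exists $d<2$ such that $(n^da_n)_{n\in\mathbb{N}}$ is eventually monotonically increasing, then, regardless of $b\in X$ (with all $b_n\ne 0$), there is no $\lambda\in c_H$ for which $k(\lambda)$ is well defined and belongs to $\ell^\infty$. 2. If there exists $d>2$ such that $(n^da_n)_{n\in\mathbb{N}}$ is eventually monotonically decreasing and $\ln(a_n/|b_n|)=o(n)$ as $n\to\infty$, then for every $\lambda\in c_H$ with $\lambda_n/a_n\to0$, we have $k(\lambda)\in\ell^1$.
   Context: $X$ is one of $\ell^p$ ($1\le p\le\infty$), $c$, $c_0$. Standing assumptions: $a=(a_n)$ strictly decreasing positive reals with $a_n\to 0$; $b=(b_n)\in X$ with $b_n\neq0$ for all $n$. $H:=\{z\in\mathbb{C}\mid\operatorname{re} z\le0\}$, $c_H:=\{(\lambda_n)\in c_0\mid\lambda_n\in H\ \forall n\}$. For $\lambda\in c_H$, $$k_n(\lambda):=-\frac{a_n-\lambda_n}{b_n}\prod_{m\ge1,\,m\neq n}\frac{1-\lambda_m/a_n}{1-a_m/a_n}.$$ A real sequence $(x_n)$ is eventually monotonically increasing (decreasing) if it is monotonically increasing (decreasing) for all $n\ge N$ for some $N$. *)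

(* Defs.v *)
From Stdlib Require Import Reals.
From Coquelicot Require Export Coquelicot.
Open Scope R_scope.

(* Indexing convention: the paper's sequences (x_n)_{n>=1} are represented by
   Rocq functions x : nat -> _ with  x k  standing for x_{k+1}. *)

Definition cseq_lim (u : nat -> C) (l : C) : Prop :=
  filterlim u eventually (locally l).

Definition abs_pow (x : R) (p : R) : R :=
  if Req_EM_T (Rabs x) 0 then 0 else Rpower (Rabs x) p.

Inductive seq_space : Type :=
  | SLp (p : R)
  | SLinf
  | Sc
  | Sc0.

Definition valid_space (X : seq_space) : Prop :=
  match X with SLp p => 1 <= p | _ => True end.

Definition cbounded (b : nat -> C) : Prop := exists M, forall n, Cmod (b n) <= M.

Definition in_space (X : seq_space) (b : nat -> C) : Prop :=
  match X with
  | SLp p => ex_series (fun n => abs_pow (Cmod (b n)) p)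
  | SLinf => cbounded b
  | Sc => exists l, cseq_lim b l
  | Sc0 => cseq_lim b 0
  end.

Definition in_cH (lam : nat -> C) : Prop :=
  cseq_lim lam 0 /\ forall n, Re (lam n) <= 0.

Fixpoint cprod (f : nat -> C) (N : nat) : C :=
  match N with
  | O => 1%C
  | S N' => (cprod f N' * f N')%C
  end.

Definition kfactor (a : nat -> R) (lam : nat -> C) (n m : nat) : C :=
  if Nat.eq_dec m n then 1%C
  else ((1 - lam m / RtoC (a n)) / (1 - RtoC (a m / a n)))%C.

Definition k_is (a : nat -> R) (b lam : nat -> C) (n : nat) (v : C) : Prop :=
  exists P : C, cseq_lim (cprod (kfactor a lam n)) P /\
    v = (- ((RtoC (a n) - lam n) / b n) * P)%C.

Definition eventually_incr (x : nat -> R) : Prop :=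
  exists N, forall n m, (N <= n)%nat -> (n <= m)%nat -> x n <= x m.
Definition eventually_decr (x : nat -> R) : Prop :=
  exists N, forall n m, (N <= n)%nat -> (n <= m)%nat -> x m <= x n.

(* the sequence n^d a_n (paper index n = k+1) *)
Definition pow_seq (d : R) (a : nat -> R) (k : nat) : R := Rpower (INR (S k)) d * a k.

Definition std_a (a : nat -> R) : Prop :=
  (forall n, 0 < a n) /\ (forall n m, (n < m)%nat -> a m < a n) /\ is_lim_seq a 0.

(* Main.v *)
Require Import Defs.
From Stdlib Require Import Reals.
From Coquelicot Require Import Coquelicot.
From Stdlib Require Import Lra Lia IndefiniteDescription.
Open Scope R_scope.

Fixpoint rprod (f : nat -> R) (N : nat) : R :=
  match N with O => 1 | S N' => rprod f N' * f N' end.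
Fixpoint rsum (f : nat -> R) (N : nat) : R :=
  match N with O => 0 | S N' => rsum f N' + f N' end.

Lemma Cmod_cprod f N : Cmod (cprod f N) = rprod (fun m => Cmod (f m)) N.
Proof. induction N; simpl. apply Cmod_1. rewrite Cmod_mult, IHN; auto. Qed.

Lemma rprod_nonneg f N : (forall m, (m < N)%nat -> 0 <= f m) -> 0 <= rprod f N.
Proof. induction N; simpl; intros H. lra. apply Rmult_le_pos; auto. Qed.

Lemma rprod_pos f N : (forall m, (m < N)%nat -> 0 < f m) -> 0 < rprod f N.
Proof. induction N; simpl; intros H. lra. apply Rmult_lt_0_compat; auto. Qed.

Lemma rprod_le f g N : (forall m, (m < N)%nat -> 0 <= f m <= g m) -> rprod f N <= rprod g N.
Proof. induction N; simpl; intros H. lra.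
  apply Rmult_le_compat; try apply H; try lia.
  apply rprod_nonneg; intros; apply H; lia.
  apply IHN; intros; apply H; lia. Qed.

Lemma rprod_mult f g N : rprod (fun m => f m * g m) N = rprod f N * rprod g N.
Proof. induction N; simpl. ring. rewrite IHN; ring. Qed.

Lemma rprod_ext f g N : (forall m, (m < N)%nat -> f m = g m) -> rprod f N = rprod g N.
Proof. induction N; simpl; intros H; auto. rewrite IHN, H; auto. Qed.

Lemma rprod_split f a N : rprod f (a + N) = rprod f a * rprod (fun i => f (a + i)%nat) N.
Proof. induction N; simpl. rewrite Nat.add_0_r; ring. rewrite Nat.add_succ_r; simpl; rewrite IHN; ring. Qed.

Lemma rprod_const c N : rprod (fun _ => c) N = c ^ N.
Proof. induction N; simpl; auto. rewrite IHN; ring. Qed.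

Lemma rsum_split f a N : rsum f (a + N) = rsum f a + rsum (fun i => f (a + i)%nat) N.
Proof. induction N; simpl. rewrite Nat.add_0_r; ring. rewrite Nat.add_succ_r; simpl; rewrite IHN; ring. Qed.

Lemma rsum_le f g N : (forall m, (m < N)%nat -> f m <= g m) -> rsum f N <= rsum g N.
Proof. induction N; simpl; intros H. lra. apply Rplus_le_compat; auto. Qed.

Lemma rsum_const c N : rsum (fun _ => c) N = c * INR N.
Proof. induction N; [simpl; ring|]. change (rsum (fun _ => c) (S N)) with (rsum (fun _ => c) N + c). rewrite IHN, S_INR; ring. Qed.

Lemma rprod_exp g N : rprod (fun m => exp (g m)) N = exp (rsum g N).
Proof. induction N; simpl. now rewrite exp_0. rewrite IHN, exp_plus; auto. Qed.

Lemma is_lim_Cmod u l : cseq_lim u l -> is_lim_seq (fun n => Cmod (u n)) (Cmod l).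
Proof. intros H. unfold is_lim_seq.
  eapply filterlim_comp. apply H. simpl.
  assert (E: forall x, Cmod x = @norm R_AbsRing (prod_NormedModule R_AbsRing R_NormedModule R_NormedModule) x) by apply Cmod_norm.
  rewrite E. 
  eapply filterlim_ext. intros x; symmetry; apply E.
  apply (@filterlim_norm _ (prod_NormedModule R_AbsRing R_NormedModule R_NormedModule)). Qed.

Lemma cseq_lim_le u l U : cseq_lim u l -> (exists N, forall M, (N <= M)%nat -> Cmod (u M) <= U) -> Cmod l <= U.
Proof. intros H [N HN].
  assert (Hl := is_lim_Cmod _ _ H).
  assert (Rbar_le (Cmod l) U).
  { eapply is_lim_seq_le_loc. 2: apply Hl. 2: apply is_lim_seq_const.
    exists N; auto. }
  simpl in H0; auto. Qed.

Lemma cseq_lim_ge u l U : cseq_lim u l -> (exists N, forall M, (N <= M)%nat -> U <= Cmod (u M)) -> U <= Cmod l.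
Proof. intros H [N HN].
  assert (Hl := is_lim_Cmod _ _ H).
  assert (Rbar_le U (Cmod l)).
  { eapply is_lim_seq_le_loc. 3: apply Hl. 2: apply is_lim_seq_const.
    exists N; auto. }
  simpl in H0; auto. Qed.

Lemma rsum_sum_n g n : rsum g (S n) = sum_n g n.
Proof. induction n. simpl. rewrite sum_O. ring.
  rewrite sum_Sn. change (rsum g (S (S n))) with (rsum g (S n) + g (S n)). rewrite IHn. reflexivity. Qed.

Lemma rsum_le_series g Sm : (forall n, 0 <= g n) -> is_series g Sm -> forall M, rsum g M <= Sm.
Proof. intros Hg HS M. destruct M. simpl.
  - assert (H := is_lim_seq_incr_compare (sum_n g) Sm HS).
    assert (sum_n g 0 <= Sm). apply H. intros n; rewrite sum_Sn; simpl; specialize (Hg (S n)); unfold plus; simpl; lra.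
    rewrite sum_O in H0. specialize (Hg 0%nat); lra.
  - rewrite rsum_sum_n. apply (is_lim_seq_incr_compare (sum_n g) Sm HS).
    intros n; rewrite sum_Sn; simpl; specialize (Hg (S n)); unfold plus; simpl; lra. Qed.

Lemma filterlim_shift {T : UniformSpace} (u : nat -> T) l :
  filterlim (fun n => u (S n)) eventually (locally l) -> filterlim u eventually (locally l).
Proof. intros H P HP. destruct (H P HP) as [N HN]. exists (S N). intros n Hn.
  destruct n. lia. apply HN. lia. Qed.

Lemma Cmod_sub_1 (z : C) : Cmod z <= 1 + Cmod (z - 1).
Proof. replace z with ((z - 1) + 1)%C at 1 by ring.
  eapply Rle_trans. apply Cmod_triangle. rewrite Cmod_1; lra. Qed.

Lemma cprod_conv (f : nat -> C) : ex_series (fun m => Cmod (f m - 1)%C) -> exists P, cseq_lim (cprod f) P.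
Proof. intros [Sm HS].
  assert (Hb : forall M, Cmod (cprod f M) <= exp Sm).
  { intros M. rewrite Cmod_cprod. eapply Rle_trans.
    apply (rprod_le _ (fun m => exp (Cmod (f m - 1)%C))). intros m _; split. apply Cmod_ge_0.
    eapply Rle_trans. apply Cmod_sub_1. apply exp_ineq1_le.
    rewrite rprod_exp. apply exp_le_3 || idtac.
    destruct (Rle_lt_or_eq_dec _ _ (rsum_le_series (fun m => Cmod (f m - 1)%C) Sm (fun n => Cmod_ge_0 _) HS M)).
    left; apply exp_increasing; auto. rewrite e; lra. }
  set (D := fun M => (cprod f (S M) - cprod f M)%C).
  assert (HD : ex_series D).
  { apply (@ex_series_le C_AbsRing C_CompleteNormedModule D (fun M => exp Sm * Cmod (f M - 1)%C)).
    intros M. unfold D. simpl. replace (cprod f M * f M - cprod f M)%C with (cprod f M * (f M - 1))%C by ring.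
    change (Cmod (cprod f M * (f M - 1)) <= exp Sm * Cmod (f M - 1)). rewrite Cmod_mult. apply Rmult_le_compat_r. apply Cmod_ge_0. apply Hb.
    exists (exp Sm * Sm). apply (@is_series_scal_l R_AbsRing R_NormedModule (exp Sm) (fun M => Cmod (f M - 1)%C) Sm HS). }
  destruct HD as [L HL].
  exists (L + 1)%C. apply filterlim_shift.
  assert (E0 : forall M, sum_n D M = (cprod f (S M) - 1)%C).
  { induction M. rewrite sum_O. unfold D; simpl. ring.
    rewrite sum_Sn, IHM. unfold D. unfold plus; simpl. ring. }
  assert (E : forall M, cprod f (S M) = (sum_n D M + 1)%C).
  { intros M; rewrite E0; ring. }
  eapply filterlim_ext. intros x; symmetry; apply E.
  change (filterlim (fun x => @plus C_AbelianGroup (sum_n D x) (RtoC 1)) eventually (locally (@plus C_AbelianGroup L (RtoC 1)))).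
  eapply filterlim_comp_2. apply HL. apply filterlim_const.
  apply (@filterlim_plus C_AbsRing C_NormedModule).
Qed.

Definition Fr (k : nat) : R := INR (Factorial.fact k).
Lemma Fr_S k : Fr (S k) = INR (S k) * Fr k.
Proof. unfold Fr. rewrite fact_simpl, mult_INR; auto. Qed.
Lemma Fr_pos k : 0 < Fr k. Proof. apply INR_fact_lt_0. Qed.

Definition hW (n m : nat) : R :=
  if Nat.eq_dec m n then 1 else (INR (S m))^2 / Rabs ((INR (S m))^2 - (INR (S n))^2).

Lemma W_low i j : rprod (hW (i + j)) i =
  Fr i ^ 2 * Fr j * Fr (i + j + 1) / (Fr (i + j) * Fr (2 * i + j + 1)).
Proof. revert j; induction i; intros j.
  - change (rprod (hW (0 + j)) 0) with 1. replace (2 * 0 + j + 1)%nat with (0 + j + 1)%nat by lia. unfold Fr at 1; simpl (INR (Factorial.fact 0)). replace (0 + j)%nat with j by lia. field. split; apply Rgt_not_eq, Fr_pos.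
  - change (rprod (hW (S i + j)) (S i)) with (rprod (hW (S i + j)) i * hW (S i + j) i).
    replace (S i + j)%nat with (i + S j)%nat by lia. rewrite IHi.
    unfold hW. destruct (Nat.eq_dec i (i + S j)). lia.
    replace (i + S j + 1)%nat with (S i + j + 1)%nat by lia.
    replace (2 * S i + j + 1)%nat with (S (2 * i + S j + 1)) by lia.
    rewrite (Fr_S (2 * i + S j + 1)), (Fr_S i), (Fr_S j).
    replace (i + S j)%nat with (S i + j)%nat by lia.
    assert (Hx := pos_INR i). assert (Hy := pos_INR j).
    rewrite Rabs_left.
    2:{ rewrite !S_INR, plus_INR, S_INR. nra. }
    repeat rewrite ?S_INR, ?plus_INR, ?mult_INR. simpl (INR 2).
    rewrite ?S_INR. simpl (INR 0).
    assert (H1 := Fr_pos (S i + j + 1)). assert (H2 := Fr_pos (S i + j)).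
    assert (H3 := Fr_pos (2 * i + S j + 1)).
    field. repeat split; try lra; nra.
Qed.

Lemma W_high n j : rprod (hW n) (n + 1 + j) = 2 * Fr (n + 1 + j) ^ 2 / (Fr j * Fr (2 * n + 2 + j)).
Proof. induction j.
  - replace (n + 1 + 0)%nat with (S n) by lia.
    change (rprod (hW n) (S n)) with (rprod (hW n) n * hW n n).
    pose proof (W_low n 0) as H. replace (n + 0)%nat with n in H by lia.
    replace (2 * n + 0 + 1)%nat with (2 * n + 1)%nat in H by lia. rewrite H.
    assert (F0 : Fr 0 = 1) by (unfold Fr; simpl; ring). rewrite F0.
    unfold hW. destruct (Nat.eq_dec n n); [|lia].
    replace (2 * n + 2 + 0)%nat with (S (2 * n + 1)) by lia.
    replace (n + 1)%nat with (S n) by lia.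
    rewrite (Fr_S (2 * n + 1)), (Fr_S n).
    assert (H1 := Fr_pos n). assert (H2 := Fr_pos (2 * n + 1)). assert (Hx := pos_INR n).
    repeat rewrite ?S_INR, ?plus_INR, ?mult_INR. simpl (INR 2). simpl (INR 0).
    field. lra.
  - replace (n + 1 + S j)%nat with (S (n + 1 + j)) by lia.
    change (rprod (hW n) (S (n + 1 + j))) with (rprod (hW n) (n + 1 + j) * hW n (n + 1 + j)).
    rewrite IHj. unfold hW. destruct (Nat.eq_dec (n + 1 + j) n); [lia|].
    replace (2 * n + 2 + S j)%nat with (S (2 * n + 2 + j)) by lia.
    rewrite (Fr_S (2 * n + 2 + j)), (Fr_S (n + 1 + j)), (Fr_S j).
    assert (Hx := pos_INR n). assert (Hy := pos_INR j).
    rewrite Rabs_right.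
    2:{ repeat rewrite ?S_INR, ?plus_INR, ?mult_INR. simpl (INR 2). simpl (INR 0). nra. }
    assert (H1 := Fr_pos (n + 1 + j)). assert (H2 := Fr_pos (2 * n + 2 + j)). assert (H3 := Fr_pos j).
    repeat rewrite ?S_INR, ?plus_INR, ?mult_INR. simpl (INR 2). simpl (INR 0).
    field. repeat split; try lra; nra.
Qed.

Lemma F1 k a b : (a <= b)%nat -> (Factorial.fact (a + k) * Factorial.fact b <= Factorial.fact (b + k) * Factorial.fact a)%nat.
Proof. intros Hab. induction k.
  - rewrite !Nat.add_0_r. lia.
  - replace (a + S k)%nat with (S (a + k)) by lia. replace (b + S k)%nat with (S (b + k)) by lia.
    rewrite !fact_simpl.
    generalize dependent (Factorial.fact (a + k)). generalize dependent (Factorial.fact (b + k)).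
    intros X Y H. nia. Qed.

Lemma F2 k a c : (c <= a)%nat -> (Factorial.fact (a + k) * Factorial.fact c * (c + 1) ^ k <= Factorial.fact (c + k) * Factorial.fact a * (a + 1) ^ k)%nat.
Proof. intros Hca. induction k.
  - rewrite !Nat.add_0_r. simpl. lia.
  - replace (a + S k)%nat with (S (a + k)) by lia. replace (c + S k)%nat with (S (c + k)) by lia.
    rewrite !fact_simpl. rewrite !Nat.pow_succ_r'.
    assert (Hm : (S (a + k) * (c + 1) <= S (c + k) * (a + 1))%nat) by nia.
    generalize dependent (Factorial.fact (a + k)). generalize dependent (Factorial.fact (c + k)).
    generalize dependent ((c + 1) ^ k)%nat. generalize dependent ((a + 1) ^ k)%nat.
    intros P Q X Y H.
    assert (H2 := Nat.mul_le_mono _ _ _ _ H Hm). nia. Qed.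

Lemma W_le2 n M : (n + 1 <= M)%nat -> rprod (hW n) M <= 2.
Proof. intros HM. replace M with (n + 1 + (M - n - 1))%nat by lia.
  set (j := (M - n - 1)%nat). rewrite W_high.
  assert (H := F1 (n + 1) j (n + 1 + j) ltac:(lia)).
  replace (j + (n + 1))%nat with (n + 1 + j)%nat in H by lia.
  replace (n + 1 + j + (n + 1))%nat with (2 * n + 2 + j)%nat in H by lia.
  apply le_INR in H. rewrite !mult_INR in H. fold (Fr (n + 1 + j)) (Fr j) (Fr (2 * n + 2 + j)) in H.
  assert (H1 := Fr_pos j). assert (H2 := Fr_pos (2 * n + 2 + j)).
  apply Rmult_le_reg_r with (Fr j * Fr (2 * n + 2 + j)). nra.
  unfold Rdiv. rewrite Rmult_assoc, Rinv_l. nra. nra. Qed.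

Lemma exp_pow x k : exp x ^ k = exp (INR k * x).
Proof. induction k. simpl. rewrite Rmult_0_l, exp_0; auto.
  simpl pow. rewrite IHk, S_INR, <- exp_plus. f_equal; ring. Qed.

Lemma pow_1k_le_e k : (0 < k)%nat -> (1 + / INR k) ^ k <= exp 1.
Proof. intros Hk. assert (Hk' : 0 < INR k) by (apply lt_0_INR; auto).
  eapply Rle_trans. apply pow_incr. split. assert (0 < / INR k) by (apply Rinv_0_lt_compat; auto). lra.
  apply exp_ineq1_le. rewrite exp_pow. right. f_equal. field. lra. Qed.

Definition jW (n : nat) : nat := (n * (n + 2))%nat.

Lemma W_ge n : 2 / 3 <= rprod (hW n) (n + 1 + jW n).
Proof. rewrite W_high. set (j := jW n). set (k := (n + 1)%nat).
  assert (H := F2 k (k + j) j ltac:(lia)).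
  replace (k + j + k)%nat with (2 * n + 2 + j)%nat in H by (unfold k; lia).
  replace (j + k)%nat with (n + 1 + j)%nat in H by (unfold k; lia).
  replace (k + j)%nat with (n + 1 + j)%nat in H by (unfold k; lia).
  apply le_INR in H. rewrite !mult_INR, !pow_INR in H. fold (Fr (n + 1 + j)) (Fr j) (Fr (2 * n + 2 + j)) in H.
  assert (Ej : INR (j + 1) = INR k * INR k).
  { rewrite <- mult_INR. f_equal. unfold j, jW, k. nia. }
  assert (Ej2 : INR (n + 1 + j + 1) = INR k * (INR k + 1)).
  { replace (n + 1 + j + 1)%nat with (k * (k + 1))%nat by (unfold j, jW, k; nia).
    rewrite mult_INR, plus_INR. simpl (INR 1). auto. }
  rewrite Ej, Ej2 in H.
  assert (Hk : 0 < INR k) by (apply lt_0_INR; unfold k; lia).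
  assert (He := pow_1k_le_e k ltac:(unfold k; lia)). assert (He3 := exp_le_3).
  assert (Hp : (INR k * (INR k + 1)) ^ k = (INR k * INR k) ^ k * (1 + / INR k) ^ k).
  { rewrite <- Rpow_mult_distr. f_equal. field. lra. }
  rewrite Hp in H.
  assert (H1 := Fr_pos j). assert (H2 := Fr_pos (2 * n + 2 + j)). assert (H3 := Fr_pos (n + 1 + j)).
  assert (Hq : 0 < (INR k * INR k) ^ k) by (apply pow_lt; nra).
  assert (Hr : 0 < (1 + / INR k) ^ k) by (apply pow_lt; assert (0 < / INR k) by (apply Rinv_0_lt_compat; auto); lra).
  assert (Fr (2 * n + 2 + j) * Fr j <= Fr (n + 1 + j) * Fr (n + 1 + j) * 3).
  { apply Rmult_le_reg_r with ((INR k * INR k) ^ k). auto.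
    eapply Rle_trans. apply H. 
    assert (0 < Fr (n + 1 + j) * Fr (n + 1 + j)) by nra. 
    replace (Fr (n + 1 + j) * Fr (n + 1 + j) * 3 * (INR k * INR k) ^ k) with (Fr (n + 1 + j) * Fr (n + 1 + j) * (INR k * INR k) ^ k * 3) by ring.
    rewrite <- Rmult_assoc. apply Rmult_le_compat_l. nra. lra. }
  apply Rmult_le_reg_r with (Fr j * Fr (2 * n + 2 + j)). nra.
  unfold Rdiv. rewrite (Rmult_assoc (2 * _)), Rinv_l. unfold k. nra. nra. Qed.

Lemma RP_pos x y : 0 < Rpower x y. Proof. unfold Rpower; apply exp_pos. Qed.

Lemma RP_le1 x e : 0 < x <= 1 -> 0 <= e -> Rpower x e <= 1.
Proof. intros Hx He. unfold Rpower. rewrite <- exp_0.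
  destruct (Req_dec x 1). subst; rewrite ln_1, Rmult_0_r; lra.
  assert (ln x < 0). { rewrite <- ln_1. apply ln_increasing; lra. }
  destruct (Rle_lt_or_eq_dec _ _ He). left; apply exp_increasing; nra. subst; rewrite Rmult_0_l; lra. Qed.

Lemma RP_ge1 x e : 0 < x <= 1 -> e <= 0 -> 1 <= Rpower x e.
Proof. intros Hx He. unfold Rpower. rewrite <- exp_0.
  destruct (Req_dec x 1). subst; rewrite ln_1, Rmult_0_r; lra.
  assert (ln x < 0). { rewrite <- ln_1. apply ln_increasing; lra. }
  destruct (Rle_lt_or_eq_dec _ _ He). left; apply exp_increasing; nra. subst; rewrite Rmult_0_l; lra. Qed.

Lemma RP_split x d : 0 < x -> Rpower x d = x ^ 2 * Rpower x (d - 2).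
Proof. intros Hx. replace d with (INR 2 + (d - 2)) at 1 by (simpl; ring).
  rewrite Rpower_plus, Rpower_pow; auto. Qed.

Lemma RP_div x y d : 0 < x -> 0 < y -> Rpower (x / y) d = Rpower x d / Rpower y d.
Proof. intros Hx Hy. unfold Rpower, Rdiv. rewrite ln_mult, ln_Rinv; auto.
  rewrite <- exp_Ropp, <- exp_plus. f_equal; ring. apply Rinv_0_lt_compat; auto. Qed.

Lemma RP_mono_neg x y e : 0 < x <= y -> e <= 0 -> Rpower y e <= Rpower x e.
Proof. intros Hxy He. unfold Rpower.
  destruct (Req_dec x y). subst; lra.
  assert (ln x < ln y) by (apply ln_increasing; lra).
  destruct (Rle_lt_or_eq_dec _ _ He). left; apply exp_increasing; nra. subst; rewrite !Rmult_0_l; lra. Qed.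

Lemma RP_mono_pos x y e : 0 < x <= y -> 0 <= e -> Rpower x e <= Rpower y e.
Proof. intros Hxy He. unfold Rpower.
  destruct (Req_dec x y). subst; lra.
  assert (ln x < ln y) by (apply ln_increasing; lra).
  destruct (Rle_lt_or_eq_dec _ _ He). left; apply exp_increasing; nra. subst; rewrite !Rmult_0_l; lra. Qed.

Lemma ln_le_xm1 x : 0 < x -> ln x <= x - 1.
Proof. intros Hx. assert (H := exp_ineq1_le (ln x)). rewrite exp_ln in H; auto. lra. Qed.

Lemma ln_ge0 x : 1 <= x -> 0 <= ln x.
Proof. intros H. destruct (Req_dec x 1). subst; rewrite ln_1; lra.
  rewrite <- ln_1. left; apply ln_increasing; lra. Qed.

Lemma grow_lemma (kap D Z : R) (N : nat) : 0 < kap -> 0 <= D ->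
  exists y : nat, (N <= y)%nat /\ (1 <= y)%nat /\ INR y * kap - D * ln (INR y) > Z.
Proof. intros Hk HD.
  destruct (INR_unbounded ((2 * D + Rabs Z + 1) / kap + INR N + 1)) as [t Ht].
  assert (HN := pos_INR N). assert (Hz := Rabs_pos Z).
  assert (Ht1 : (2 * D + Rabs Z + 1) / kap >= 0). { apply Rle_ge. apply Rdiv_le_0_compat; lra. }
  assert (Htp : 1 < INR t) by lra.
  exists (t * t)%nat. assert (Hn : (N < t)%nat). { apply INR_lt. lra. }
  split. nia. split. assert (1 <= t)%nat by lia. nia.
  rewrite mult_INR, ln_mult by lra.
  assert (Hl := ln_le_xm1 (INR t) ltac:(lra)).
  assert (Htk : INR t * kap > 2 * D + Rabs Z + 1).
  { assert (INR t > (2 * D + Rabs Z + 1) / kap) by lra.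
    apply Rmult_gt_compat_r with (r := kap) in H; auto. unfold Rdiv in H. rewrite Rmult_assoc, Rinv_l in H; lra. }
  assert (Z <= Rabs Z) by apply Rle_abs.
  nra. Qed.

Lemma Re_div_R (z : C) r : r <> 0 -> Re (z / RtoC r) = Re z / r.
Proof. intros Hr. destruct z as [x y]. unfold Cdiv, Cinv, Cmult, Re, RtoC; simpl. field. auto. Qed.

Lemma Cmod_div_R (z : C) r : 0 < r -> Cmod (z / RtoC r) = Cmod z / r.
Proof. intros Hr. rewrite Cmod_div. rewrite Cmod_R, Rabs_right; lra.
  intros H. apply (f_equal fst) in H. simpl in H. lra. Qed.

Lemma Cmod_1mR r : Cmod (1 - RtoC r) = Rabs (1 - r).
Proof. rewrite <- Cmod_R. f_equal. rewrite <- RtoC_minus. reflexivity. Qed.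

Section KF.
Variables (a : nat -> R) (lam : nat -> C).
Hypothesis Ha : forall n, 0 < a n.
Hypothesis Hinj : forall n m, n <> m -> a n <> a m.

Lemma kf_eq n : kfactor a lam n n = 1%C.
Proof. unfold kfactor. destruct (Nat.eq_dec n n); tauto. Qed.

Lemma den_nz n m : m <> n -> (1 - RtoC (a m / a n))%C <> 0%C.
Proof. intros H E. apply (f_equal Cmod) in E. rewrite Cmod_1mR, Cmod_0 in E.
  apply Rabs_eq_0 in E. assert (Hn := Ha n). assert (a m = a n).
  { assert (a m / a n = 1) by lra. unfold Rdiv in H0. apply (Rmult_eq_compat_r (a n)) in H0.
    rewrite Rmult_assoc, Rinv_l in H0; lra. }
  apply (Hinj m n); auto. Qed.

Lemma abs1m n m : Rabs (1 - a m / a n) = Rabs (a n - a m) / a n.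
Proof. assert (Hn := Ha n). replace (1 - a m / a n) with ((a n - a m) / a n) by (field; lra).
  rewrite Rabs_div, (Rabs_right (a n)); lra. Qed.

Lemma kf_ge n m : m <> n -> Re (lam m) <= 0 -> / Rabs (1 - a m / a n) <= Cmod (kfactor a lam n m).
Proof. intros Hmn Hre. unfold kfactor. destruct (Nat.eq_dec m n); [tauto|].
  rewrite Cmod_div by (apply den_nz; auto). rewrite Cmod_1mR.
  assert (Hpos : 0 < Rabs (1 - a m / a n)).
  { apply Rabs_pos_lt. intros E. apply (den_nz n m Hmn). rewrite <- RtoC_minus. rewrite E. reflexivity. }
  assert (H1 : 1 <= Cmod (1 - lam m / RtoC (a n))).
  { eapply Rle_trans. 2: apply re_le_Cmod. eapply Rle_trans. 2: apply Rle_abs.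
  assert (Hn := Ha n).
  replace (Re (1 - lam m / RtoC (a n))) with (1 - Re (lam m / RtoC (a n)))
    by (destruct (lam m / RtoC (a n))%C; unfold Cminus, Cplus, Copp, Re; simpl; ring).
  rewrite Re_div_R by lra.
  assert (Re (lam m) / a n <= 0). { unfold Rdiv. assert (0 < / a n) by (apply Rinv_0_lt_compat; auto). nra. }
  lra. }
  unfold Rdiv. rewrite <- (Rmult_1_l (/ Rabs _)) at 1. apply Rmult_le_compat_r.
  left; apply Rinv_0_lt_compat; auto. auto.
Qed.

Lemma kf_le n m : m <> n -> Cmod (kfactor a lam n m) <= (a n + Cmod (lam m)) / Rabs (a n - a m).
Proof. intros Hmn. unfold kfactor. destruct (Nat.eq_dec m n); [tauto|].
  rewrite Cmod_div by (apply den_nz; auto). rewrite Cmod_1mR, abs1m.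
  assert (Hn := Ha n). assert (Hp : 0 < Rabs (a n - a m)).
  { apply Rabs_pos_lt. intros E. apply (Hinj n m); auto; lra. }
  assert (Cmod (1 - lam m / RtoC (a n)) <= 1 + Cmod (lam m) / a n).
  { unfold Cminus. eapply Rle_trans. apply Cmod_triangle. rewrite Cmod_opp, Cmod_1, Cmod_div_R; lra. }
  apply Rle_trans with ((1 + Cmod (lam m) / a n) / (Rabs (a n - a m) / a n)).
  apply Rmult_le_compat_r. left; apply Rinv_0_lt_compat. apply Rdiv_lt_0_compat; auto. auto.
  right. field. lra. Qed.

Lemma kf_m1 n m : m <> n -> Cmod (kfactor a lam n m - 1) <= (a m + Cmod (lam m)) / Rabs (a n - a m).
Proof. intros Hmn. unfold kfactor. destruct (Nat.eq_dec m n); [tauto|].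
  assert (Hd := den_nz n m Hmn). assert (Hn := Ha n). assert (Hm := Ha m).
  replace ((1 - lam m / RtoC (a n)) / (1 - RtoC (a m / a n)) - 1)%C with
    ((RtoC (a m / a n) - lam m / RtoC (a n)) / (1 - RtoC (a m / a n)))%C by (field; repeat split; auto; intros E; apply (f_equal fst) in E; simpl in E; lra).
  rewrite Cmod_div by auto. rewrite Cmod_1mR, abs1m.
  assert (Hp : 0 < Rabs (a n - a m)).
  { apply Rabs_pos_lt. intros E. apply (Hinj n m); auto; lra. }
  assert (Cmod (RtoC (a m / a n) - lam m / RtoC (a n)) <= a m / a n + Cmod (lam m) / a n).
  { unfold Cminus. eapply Rle_trans. apply Cmod_triangle. rewrite Cmod_opp, Cmod_R, Cmod_div_R by lra.
    rewrite Rabs_right. lra. apply Rle_ge. apply Rdiv_le_0_compat; lra. }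
  apply Rle_trans with ((a m / a n + Cmod (lam m) / a n) / (Rabs (a n - a m) / a n)).
  apply Rmult_le_compat_r. left; apply Rinv_0_lt_compat. apply Rdiv_lt_0_compat; auto. auto.
  right. field. lra. Qed.
End KF.

Lemma hW_lt n m : (m < n)%nat -> hW n m = (INR (S m) / INR (S n)) ^ 2 / (1 - (INR (S m) / INR (S n)) ^ 2).
Proof. intros H. unfold hW. destruct (Nat.eq_dec m n). lia.
  assert (Hq : 0 < INR (S m)) by (apply lt_0_INR; lia).
  assert (Hpq : INR (S m) < INR (S n)) by (apply lt_INR; lia).
  rewrite Rabs_left by nra. field. split; nra. Qed.

Lemma hW_gt n m : (n < m)%nat -> hW n m = 1 / (1 - (INR (S n) / INR (S m)) ^ 2).
Proof. intros H. unfold hW. destruct (Nat.eq_dec m n). lia.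
  assert (Hq : 0 < INR (S n)) by (apply lt_0_INR; lia).
  assert (Hpq : INR (S n) < INR (S m)) by (apply lt_INR; lia).
  rewrite Rabs_right by nra. field. split; nra. Qed.

Lemma hW_nonneg n m : 0 <= hW n m.
Proof. unfold hW. destruct (Nat.eq_dec m n). lra. apply Rdiv_le_0_compat. apply pow2_ge_0.
  apply Rabs_pos_lt. intros E. apply n0. assert (INR (S m) ^ 2 = INR (S n) ^ 2) by lra.
  assert (INR (S m) = INR (S n)). { assert (0 < INR (S m)) by (apply lt_0_INR; lia). assert (0 < INR (S n)) by (apply lt_0_INR; lia). nra. }
  apply INR_eq in H0. lia. Qed.

Lemma aux_lt x u rho : 0 < x < 1 -> 1 <= u -> x ^ 2 * u <= rho < 1 -> x ^ 2 / (1 - x ^ 2) * u <= rho / (1 - rho).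
Proof. intros Hx Hu Hr. assert (0 < x^2 < 1) by (split; nra).
  assert (x^2 <= rho) by nra.
  apply Rmult_le_reg_r with ((1 - x^2) * (1 - rho)). nra.
  replace (x ^ 2 / (1 - x ^ 2) * u * ((1 - x ^ 2) * (1 - rho))) with (x^2 * u * (1 - rho)) by (field; lra).
  replace (rho / (1 - rho) * ((1 - x ^ 2) * (1 - rho))) with (rho * (1 - x^2)) by (field; lra).
  nra. Qed.

Section P1.
Variables (a : nat -> R) (d : R) (N0 : nat).
Hypothesis Ha : forall n, 0 < a n.
Hypothesis Hdec : forall n m, (n < m)%nat -> a m < a n.
Hypothesis Hd : d < 2.
Hypothesis Hinc : forall i j, (N0 <= i)%nat -> (i <= j)%nat -> pow_seq d a i <= pow_seq d a j.

Definition c1 (n m : nat) : R :=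
  if (m <? N0)%nat then a n / a 0 else if (m <? n)%nat then Rpower (INR (S m) / INR (S n)) (d - 2) else 1.

Lemma a_le0 m : a m <= a 0.
Proof. destruct m. lra. left; apply Hdec; lia. Qed.

Lemma ratio_ge i j : (N0 <= i)%nat -> (i <= j)%nat -> Rpower (INR (S i) / INR (S j)) d <= a j / a i.
Proof. intros H1 H2. assert (H := Hinc i j H1 H2). unfold pow_seq in H.
  assert (0 < INR (S i)) by (apply lt_0_INR; lia). assert (0 < INR (S j)) by (apply lt_0_INR; lia).
  rewrite RP_div by auto. assert (Hi := Ha i). assert (Hj := Ha j).
  assert (P1 := RP_pos (INR (S i)) d). assert (P2 := RP_pos (INR (S j)) d).
  apply Rmult_le_reg_r with (Rpower (INR (S j)) d * a i). nra.
  replace (Rpower (INR (S i)) d / Rpower (INR (S j)) d * (Rpower (INR (S j)) d * a i)) with (Rpower (INR (S i)) d * a i) by (field; lra).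
  replace (a j / a i * (Rpower (INR (S j)) d * a i)) with (Rpower (INR (S j)) d * a j) by (field; lra). auto. Qed.

Lemma p1_fac n m : (N0 <= n)%nat -> (2 * N0 <= S n)%nat -> m <> n -> hW n m * c1 n m <= / Rabs (1 - a m / a n).
Proof. intros Hn HN Hmn.
  assert (Hp : 0 < INR (S n)) by (apply lt_0_INR; lia). assert (Hq : 0 < INR (S m)) by (apply lt_0_INR; lia).
  assert (Han := Ha n). assert (Ham := Ha m). assert (Ha0 := Ha 0).
  destruct (Nat.lt_ge_cases m n) as [Hlt|Hge].
  - assert (Hamn := Hdec _ _ Hlt).
    assert (E : / Rabs (1 - a m / a n) = (a n / a m) / (1 - a n / a m)).
    { rewrite Rabs_left. field. split; lra. apply Rlt_minus. apply (Rmult_lt_reg_r (a n)); auto. unfold Rdiv; rewrite Rmult_assoc, Rinv_l; lra. }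
    rewrite E, hW_lt by auto.
    set (x := INR (S m) / INR (S n)).
    assert (Hx : 0 < x < 1). { unfold x; split. apply Rdiv_lt_0_compat; auto.
      apply (Rmult_lt_reg_r (INR (S n))); auto. unfold Rdiv; rewrite Rmult_assoc, Rinv_l by lra. rewrite Rmult_1_l, Rmult_1_r. apply lt_INR; lia. }
    set (rho := a n / a m).
    assert (Hrho : 0 < rho < 1). { unfold rho; split. apply Rdiv_lt_0_compat; auto.
      apply (Rmult_lt_reg_r (a m)); auto. unfold Rdiv; rewrite Rmult_assoc, Rinv_l by lra. lra. }
    unfold c1. destruct (m <? N0)%nat eqn:E1.
    + apply Nat.ltb_lt in E1.
      assert (Hh : x ^ 2 / (1 - x ^ 2) <= 1).
      { assert (2 * INR (S m) ^ 2 <= INR (S n) ^ 2).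
        { assert (INR (S m) <= INR N0) by (apply le_INR; lia). assert (2 * INR N0 <= INR (S n)).
          { replace 2 with (INR 2) by (simpl; ring). rewrite <- mult_INR. apply le_INR; lia. }
          assert (0 <= INR N0) by apply pos_INR. nra. }
        assert (x ^ 2 <= 1 / 2). { unfold x. unfold Rdiv. rewrite Rpow_mult_distr, pow_inv.
          apply (Rmult_le_reg_r (INR (S n) ^ 2)). nra. rewrite Rmult_assoc, Rinv_l by nra. lra. }
        apply (Rmult_le_reg_r (1 - x ^ 2)). lra. unfold Rdiv. rewrite Rmult_assoc, Rinv_l by lra. lra. }
      assert (a n / a 0 <= rho). { unfold rho. apply Rmult_le_compat_l. lra. apply Rinv_le_contravar; auto. apply a_le0. }
      assert (rho <= rho / (1 - rho)). { apply (Rmult_le_reg_r (1 - rho)). lra. unfold Rdiv; rewrite Rmult_assoc, Rinv_l by lra. nra. }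
      assert (0 <= a n / a 0) by (apply Rdiv_le_0_compat; lra).
      assert (0 <= x ^ 2 / (1 - x ^ 2)) by (apply Rdiv_le_0_compat; nra).
      nra.
    + apply Nat.ltb_ge in E1. assert (E2 : (m <? n)%nat = true) by (apply Nat.ltb_lt; auto). rewrite E2.
      fold x. apply aux_lt; auto. apply RP_ge1; lra.
      split; [|lra]. rewrite <- RP_split by lra. unfold rho, x. apply ratio_ge; lia.
  - assert (Hgt : (n < m)%nat) by lia. assert (Hamn := Hdec _ _ Hgt).
    unfold c1. destruct (m <? N0)%nat eqn:E1. apply Nat.ltb_lt in E1; lia.
    destruct (m <? n)%nat eqn:E2. apply Nat.ltb_lt in E2; lia. rewrite Rmult_1_r.
    rewrite hW_gt by auto. set (z := INR (S n) / INR (S m)).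
    assert (Hz : 0 < z < 1). { unfold z; split. apply Rdiv_lt_0_compat; auto.
      apply (Rmult_lt_reg_r (INR (S m))); auto. unfold Rdiv; rewrite Rmult_assoc, Rinv_l by lra. rewrite Rmult_1_l, Rmult_1_r. apply lt_INR; lia. }
    assert (Hr : z ^ 2 <= a m / a n).
    { eapply Rle_trans. 2: apply ratio_ge; lia. fold z. rewrite (RP_split z d) by lra.
      assert (1 <= Rpower z (d - 2)) by (apply RP_ge1; lra). nra. }
    assert (Hr1 : a m / a n < 1). { apply (Rmult_lt_reg_r (a n)); auto. unfold Rdiv; rewrite Rmult_assoc, Rinv_l; lra. }
    rewrite Rabs_right by lra.
    unfold Rdiv. rewrite Rmult_1_l. apply Rinv_le_contravar; nra. Qed.
End P1.

Lemma rsum_nonneg f N : (forall i, 0 <= f i) -> 0 <= rsum f N.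
Proof. intros Hf. induction N; simpl. lra. specialize (Hf N); lra. Qed.

Lemma rsum_ge_term f N m : (forall i, 0 <= f i) -> (m < N)%nat -> f m <= rsum f N.
Proof. intros Hf. induction N; intros H. lia. simpl. destruct (Nat.eq_dec m N). subst.
  assert (0 <= rsum f N) by (apply rsum_nonneg; auto). lra.
  assert (f m <= rsum f N) by (apply IHN; lia). specialize (Hf N). lra. Qed.

Lemma ev_bounded (b : nat -> C) : (exists N U, forall n, (N <= n)%nat -> Cmod (b n) <= U) ->
  exists B, 0 < B /\ forall n, Cmod (b n) <= B.
Proof. intros [N [U HU]]. exists (Rabs U + rsum (fun i => Cmod (b i)) N + 1).
  assert (H0 := rsum_nonneg (fun i => Cmod (b i)) N (fun i => Cmod_ge_0 _)).
  split. assert (0 <= Rabs U) by apply Rabs_pos. lra.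
  intros n. destruct (Nat.lt_ge_cases n N).
  assert (H1 := rsum_ge_term (fun i => Cmod (b i)) N n (fun i => Cmod_ge_0 _) H). assert (0 <= Rabs U) by apply Rabs_pos. simpl in H1. lra.
  specialize (HU n H). assert (U <= Rabs U) by apply Rle_abs. lra. Qed.

Lemma b_bounded X (b : nat -> C) : valid_space X -> in_space X b -> exists B, 0 < B /\ forall n, Cmod (b n) <= B.
Proof. intros HX Hb. apply ev_bounded. destruct X; simpl in *.
  - apply ex_series_lim_0 in Hb. apply is_lim_seq_spec in Hb. destruct (Hb (mkposreal 1 Rlt_0_1)) as [N HN].
    exists N, 1. intros n Hn. specialize (HN n Hn). simpl in HN. rewrite Rminus_0_r in HN.
    unfold abs_pow in HN. destruct (Req_EM_T (Rabs (Cmod (b n))) 0).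
    rewrite Rabs_right in e by (apply Rle_ge, Cmod_ge_0). lra.
    assert (Ec : Rabs (Cmod (b n)) = Cmod (b n)) by (apply Rabs_right, Rle_ge, Cmod_ge_0).
    rewrite Ec in HN. rewrite (Rabs_right (Rpower _ _)) in HN by (left; apply RP_pos).
    destruct (Rle_or_lt (Cmod (b n)) 1) as [|Hgt]; auto.
    assert (Rpower (Cmod (b n)) 0 < Rpower (Cmod (b n)) p) by (apply Rpower_lt; lra).
    rewrite Rpower_O in H by lra. lra.
  - destruct Hb as [M HM]. exists O, M. auto.
  - destruct Hb as [l Hl]. destruct (@filterlim_bounded C_AbsRing C_NormedModule b) as [M HM]. exists l. exact Hl.
    exists O, M. intros; apply HM.
  - destruct (@filterlim_bounded C_AbsRing C_NormedModule b) as [M HM]. exists (RtoC 0). exact Hb.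
    exists O, M. intros; apply HM. Qed.

Lemma rprod_ge1 f N : (forall m, (m < N)%nat -> 1 <= f m) -> 1 <= rprod f N.
Proof. induction N; simpl; intros H. lra. assert (1 <= rprod f N) by (apply IHN; intros; apply H; lia).
  assert (1 <= f N) by (apply H; lia). nra. Qed.

Lemma rprod_pw A B M al be : (A <= B)%nat -> (B <= M)%nat ->
  rprod (fun m => if (m <? A)%nat then al else if (m <? B)%nat then be else 1) M = al ^ A * be ^ (B - A).
Proof. intros H1 H2. replace M with (A + ((B - A) + (M - B)))%nat by lia.
  rewrite rprod_split, rprod_split.
  rewrite (rprod_ext _ (fun _ => al)). 2:{ intros m Hm. destruct (m <? A)%nat eqn:E; auto. apply Nat.ltb_ge in E; lia. }
  rewrite (rprod_ext _ (fun _ => be) (B - A)). 2:{ intros m Hm. destruct (A + m <? A)%nat eqn:E. apply Nat.ltb_lt in E; lia.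
     destruct (A + m <? B)%nat eqn:E2; auto. apply Nat.ltb_ge in E2; lia. }
  rewrite (rprod_ext _ (fun _ => 1) (M - B)). 2:{ intros m Hm. destruct (A + (B - A + m) <? A)%nat eqn:E. apply Nat.ltb_lt in E; lia.
     destruct (A + (B - A + m) <? B)%nat eqn:E2; auto. apply Nat.ltb_lt in E2; lia. }
  rewrite !rprod_const, pow1. ring. Qed.

Lemma Cmod_kis (a : nat -> R) (b lam : nat -> C) n v P : b n <> 0%C -> v = (- ((RtoC (a n) - lam n) / b n) * P)%C ->
  Cmod v = Cmod (RtoC (a n) - lam n) / Cmod (b n) * Cmod P.
Proof. intros Hb ->. rewrite Cmod_mult, Cmod_opp, Cmod_div; auto. Qed.

Lemma Cmod_a_lam (an : R) (l : C) : Re l <= 0 -> an <= Cmod (RtoC an - l).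
Proof. intros H. eapply Rle_trans. 2: apply re_le_Cmod. eapply Rle_trans. 2: apply Rle_abs.
  destruct l as [x y]. unfold Cminus, Cplus, Copp, RtoC, Re in *; simpl in *. lra. Qed.

Section P1main.
Variables (a : nat -> R) (lam : nat -> C) (d : R) (N0 : nat).
Hypothesis Ha : forall n, 0 < a n.
Hypothesis Hdec : forall n m, (n < m)%nat -> a m < a n.
Hypothesis Hd : d < 2.
Hypothesis Hinc : forall i j, (N0 <= i)%nat -> (i <= j)%nat -> pow_seq d a i <= pow_seq d a j.
Hypothesis Hre : forall n, Re (lam n) <= 0.

Lemma Hinj : forall n m, n <> m -> a n <> a m.
Proof. intros n m H E. destruct (Nat.lt_ge_cases n m). specialize (Hdec n m H0); lra.
  assert (m < n)%nat by lia. specialize (Hdec m n H1); lra. Qed.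

Definition theta1 := Rpower (/ 2) (d - 2).

Lemma theta1_gt1 : 1 < theta1.
Proof. unfold theta1, Rpower. rewrite <- exp_0. apply exp_increasing.
  assert (ln (/ 2) < 0). { rewrite <- ln_1. apply ln_increasing; lra. } nra. Qed.

Lemma p1_lower s : (N0 <= s)%nat ->
  forall M, (2 * s + 1 + 1 + jW (2 * s + 1) <= M)%nat ->
  2 / 3 * (a (2 * s + 1)%nat / a 0) ^ N0 * theta1 ^ (s + 1 - N0) <= Cmod (cprod (kfactor a lam (2 * s + 1)) M).
Proof. intros Hs M HM. set (n := (2 * s + 1)%nat). set (t := (s + 1)%nat). set (M0 := (n + 1 + jW n)%nat).
  assert (HnN : (N0 <= n)%nat) by (unfold n; lia). assert (HN2 : (2 * N0 <= S n)%nat) by (unfold n; lia).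
  set (c2 := fun m : nat => if (m <? N0)%nat then a n / a 0 else if (m <? t)%nat then theta1 else 1).
  assert (Hth := theta1_gt1). assert (Hal : 0 < a n / a 0) by (apply Rdiv_lt_0_compat; auto).
  assert (Hc2 : forall m, 0 <= c2 m). { intros m; unfold c2. destruct (m <? N0)%nat; [lra|]. destruct (m <? t)%nat; lra. }
  assert (Hle : forall m, hW n m * c2 m <= Cmod (kfactor a lam n m)).
  { intros m. destruct (Nat.eq_dec m n) as [->|Hmn].
    - rewrite kf_eq. unfold hW, c2. destruct (Nat.eq_dec n n); [|lia].
      destruct (n <? N0)%nat eqn:E. apply Nat.ltb_lt in E; lia. destruct (n <? t)%nat eqn:E2. apply Nat.ltb_lt in E2; unfold t, n in E2; lia.
      rewrite Cmod_1; lra.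
    - eapply Rle_trans. 2: apply (kf_ge a lam Ha Hinj n m Hmn (Hre m)).
      eapply Rle_trans. 2: apply (p1_fac a d N0); auto.
      apply Rmult_le_compat_l. apply hW_nonneg.
      unfold c2. unfold c1. destruct (m <? N0)%nat eqn:E1. lra.
      assert (Hp : 0 < INR (S n)) by (apply lt_0_INR; lia). assert (Hq : 0 < INR (S m)) by (apply lt_0_INR; lia).
      destruct (m <? t)%nat eqn:E2.
      + apply Nat.ltb_lt in E2. assert (E3 : (m <? n)%nat = true) by (apply Nat.ltb_lt; unfold t, n in *; lia). rewrite E3.
        unfold theta1. apply RP_mono_neg. 2: lra. split. apply Rdiv_lt_0_compat; auto.
        apply (Rmult_le_reg_r (INR (S n))); auto. unfold Rdiv. rewrite Rmult_assoc, Rinv_l by lra.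
        assert (INR (S m) * 2 <= INR (S n)). { replace 2 with (INR 2) by (simpl; ring). rewrite <- mult_INR. apply le_INR. unfold t, n in *; lia. }
        lra.
      + destruct (m <? n)%nat eqn:E3; [|lra]. apply RP_ge1. 2: lra. split. apply Rdiv_lt_0_compat; auto.
        apply Nat.ltb_lt in E3. apply (Rmult_le_reg_r (INR (S n))); auto. unfold Rdiv. rewrite Rmult_assoc, Rinv_l by lra.
        rewrite Rmult_1_l, Rmult_1_r. apply le_INR; lia. }
  rewrite Cmod_cprod. assert (HMM : (M0 <= M)%nat) by exact HM. replace M with (M0 + (M - M0))%nat by lia. rewrite rprod_split.
  assert (Hge1 : 1 <= rprod (fun i => Cmod (kfactor a lam n (M0 + i))) (M - M0)).
  { apply rprod_ge1. intros i Hi. assert (Hnm : (n < M0 + i)%nat) by (unfold M0; lia).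
    eapply Rle_trans. 2: apply (kf_ge a lam Ha Hinj n (M0 + i) ltac:(lia) (Hre _)).
    assert (Hr := Hdec _ _ Hnm). assert (Han := Ha n). assert (Ham := Ha (M0 + i)%nat).
    assert (0 < a (M0 + i)%nat / a n < 1). { split. apply Rdiv_lt_0_compat; auto.
      apply (Rmult_lt_reg_r (a n)); auto. unfold Rdiv; rewrite Rmult_assoc, Rinv_l; lra. }
    rewrite Rabs_right by lra. rewrite <- Rinv_1. apply Rinv_le_contravar; lra. }
  assert (HP : rprod (fun m => hW n m * c2 m) M0 <= rprod (fun m => Cmod (kfactor a lam n m)) M0).
  { apply rprod_le. intros m _. split. apply Rmult_le_pos. apply hW_nonneg. auto. auto. }
  rewrite rprod_mult in HP. unfold c2 in HP. rewrite rprod_pw in HP by (unfold M0, t, n; lia).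
  assert (HW := W_ge n). fold M0 in HW.
  assert (0 <= (a n / a 0) ^ N0 * theta1 ^ (t - N0)). { apply Rmult_le_pos; apply pow_le; lra. }
  assert (0 <= rprod (fun m => Cmod (kfactor a lam n m)) M0). { apply rprod_nonneg; intros; apply Cmod_ge_0. }
  fold t. 
  apply Rle_trans with (rprod (fun m => Cmod (kfactor a lam n m)) M0). 2:{ rewrite <- (Rmult_1_r (rprod _ M0)) at 1. apply Rmult_le_compat_l; lra. }
  eapply Rle_trans. 2: apply HP. rewrite Rmult_assoc. apply Rmult_le_compat_r; lra. Qed.
End P1main.

Lemma part1 (a : nat -> R) (b : nat -> C) : std_a a -> (forall n, b n <> 0%C) ->
  (exists B, 0 < B /\ forall n, Cmod (b n) <= B) ->
  (exists d, d < 2 /\ eventually_incr (pow_seq d a)) ->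
  ~ (exists lam : nat -> C, in_cH lam /\
          exists k : nat -> C, (forall n, k_is a b lam n (k n)) /\ cbounded k).
Proof.
  intros [Ha [Hdec _]] Hbnz [B [HB HBb]] [d [Hd [N0 Hinc]]] [lam [[_ Hre] [k [Hk [K HK]]]]].
  assert (Hinc' : forall i j, (N0 <= i)%nat -> (i <= j)%nat -> pow_seq d a i <= pow_seq d a j).
  { exact Hinc. }
  set (th := theta1 d). assert (Hth : 1 < th) by (apply theta1_gt1; auto).
  set (kap := ln th). assert (Hkap : 0 < kap) by (unfold kap; rewrite <- ln_1; apply ln_increasing; lra).
  assert (Ethk : th = exp kap) by (unfold kap; rewrite exp_ln; lra).
  set (c0 := pow_seq d a N0). assert (Hc0 : 0 < c0) by (unfold c0, pow_seq; apply Rmult_lt_0_compat; [apply RP_pos|apply Ha]).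
  assert (Ha0 := Ha 0%nat).
  set (Cst := c0 / B * (2 / 3) * (c0 / a 0%nat) ^ N0).
  assert (HCst : 0 < Cst) by (unfold Cst; apply Rmult_lt_0_compat; [apply Rmult_lt_0_compat; [apply Rdiv_lt_0_compat|]|apply pow_lt; apply Rdiv_lt_0_compat]; lra).
  set (D := INR (S N0) * Rabs d). assert (HD : 0 <= D) by (unfold D; apply Rmult_le_pos; [apply pos_INR|apply Rabs_pos]).
  set (K' := Rabs K + 1).
  destruct (grow_lemma kap D (ln (K' / Cst) + INR N0 * kap + D * ln 2) (S N0) Hkap HD) as [y [Hy1 [Hy2 Hy3]]].
  set (s := (y - 1)%nat). assert (Hs : (N0 <= s)%nat) by (unfold s; lia).
  set (n := (2 * s + 1)%nat).
  destruct (Hk n) as [P [HPl Hv]].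
  assert (HLB := p1_lower a lam d N0 Ha Hdec Hd Hinc' Hre s Hs).
  assert (HP : 2 / 3 * (a n / a 0%nat) ^ N0 * theta1 d ^ (s + 1 - N0) <= Cmod P).
  { eapply cseq_lim_ge. apply HPl. exists (2 * s + 1 + 1 + jW (2 * s + 1))%nat. intros M HM. apply HLB; auto. }
  fold th in HP.
  assert (Hkn := Cmod_kis a b lam n (k n) P (Hbnz n) Hv).
  assert (Hkn2 : a n / B * Cmod P <= Cmod (k n)).
  { rewrite Hkn. apply Rmult_le_compat_r. apply Cmod_ge_0. unfold Rdiv. apply Rmult_le_compat.
    left; apply Ha. left; apply Rinv_0_lt_compat; auto. apply Cmod_a_lam; auto.
    apply Rinv_le_contravar; auto. assert (Hb0 : Cmod (b n) <> 0). { intros E. apply Cmod_eq_0 in E. apply (Hbnz n); auto. }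
    assert (0 <= Cmod (b n)) by apply Cmod_ge_0. lra. }
  set (R := Rpower (INR (S n)) (- d)).
  assert (HR : 0 < R) by apply RP_pos.
  assert (HaR : c0 * R <= a n).
  { assert (H := Hinc' N0 n ltac:(lia) ltac:(unfold n; lia)). fold c0 in H. unfold pow_seq in H.
    unfold R. rewrite Rpower_Ropp. assert (Hp := RP_pos (INR (S n)) d).
    apply (Rmult_le_reg_l (Rpower (INR (S n)) d)); auto. replace (Rpower (INR (S n)) d * (c0 * / Rpower (INR (S n)) d)) with c0 by (field; lra). auto. }
  assert (Hbig : Cst * (R ^ (S N0) * th ^ (s + 1 - N0)) <= Cmod (k n)).
  { eapply Rle_trans. 2: apply Hkn2. eapply Rle_trans. 2: { apply Rmult_le_compat_l. apply Rdiv_le_0_compat; [left; apply Ha|lra]. apply HP. }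
    unfold Cst. simpl pow.
    assert (H1 : c0 * R / a 0%nat <= a n / a 0%nat) by (apply Rmult_le_compat_r; [left; apply Rinv_0_lt_compat|]; lra).
    assert (H2 : (c0 * R / a 0%nat) ^ N0 <= (a n / a 0%nat) ^ N0) by (apply pow_incr; split; [apply Rdiv_le_0_compat; nra|auto]).
    assert (H3 : c0 * R / B <= a n / B) by (apply Rmult_le_compat_r; [left; apply Rinv_0_lt_compat|]; lra).
    assert (0 < th ^ (s + 1 - N0)) by (apply pow_lt; lra).
    assert (0 <= (c0 * R / a 0%nat) ^ N0) by (apply pow_le; apply Rdiv_le_0_compat; nra).
    assert (0 <= c0 * R / B) by (apply Rdiv_le_0_compat; nra).
    replace (c0 / B * (2 / 3) * (c0 / a 0%nat) ^ N0 * (R * R ^ N0 * th ^ (s + 1 - N0)))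
      with (c0 * R / B * (2 / 3 * (c0 * R / a 0%nat) ^ N0 * th ^ (s + 1 - N0))) by (unfold Rdiv; rewrite !Rpow_mult_distr; field; lra).
    apply Rmult_le_compat; try nra. }
  assert (Hexp : Cst * (R ^ S N0 * th ^ (s + 1 - N0)) > K').
  { rewrite Ethk, exp_pow. unfold R, Rpower. rewrite exp_pow, <- exp_plus.
    assert (Ey : (s + 1)%nat = y) by (unfold s; lia).
    replace (INR (S n)) with (2 * INR y) by (replace (S n) with (2 * y)%nat by (unfold n, s; lia); rewrite mult_INR; simpl; ring).
    rewrite ln_mult by (try lra; apply lt_0_INR; lia). rewrite Ey, minus_INR by lia.
    assert (Hly : 0 <= ln (INR y)) by (apply ln_ge0; apply (le_INR 1); lia).
    assert (Hl2 : 0 <= ln 2) by (apply ln_ge0; lra).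
    assert (HdD : - D * (ln 2 + ln (INR y)) <= INR (S N0) * (- d * (ln 2 + ln (INR y)))).
    { unfold D. assert (0 <= INR (S N0)) by apply pos_INR. assert (-Rabs d <= - d) by (assert (d <= Rabs d) by apply Rle_abs; lra).
      assert (0 <= ln 2 + ln (INR y)) by lra. replace (- (INR (S N0) * Rabs d) * (ln 2 + ln (INR y))) with (INR (S N0) * ((- Rabs d) * (ln 2 + ln (INR y)))) by ring.
      apply Rmult_le_compat_l; auto. apply Rmult_le_compat_r; auto. }
    assert (HK' : 0 < K') by (unfold K'; assert (0 <= Rabs K) by apply Rabs_pos; lra).
    replace K' with (Cst * exp (ln (K' / Cst))) by (rewrite exp_ln by (apply Rdiv_lt_0_compat; auto); field; lra).
    apply Rmult_gt_compat_l; auto. apply exp_increasing. lra. }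
  specialize (HK n). unfold K' in Hexp. assert (K <= Rabs K) by apply Rle_abs. lra.
Qed.

Lemma divfacts x y : y <> 0%nat -> (y * (x / y) <= x)%nat /\ (x < y * (x / y) + y)%nat.
Proof. intros Hy. assert (H1 := Nat.div_mod x y Hy). assert (H2 := Nat.mod_upper_bound x y Hy). lia. Qed.

Lemma tele_series : is_series (fun k => / INR (S k) - / INR (S (S k))) 1.
Proof.
  assert (E : forall n, sum_n (fun k => / INR (S k) - / INR (S (S k))) n = 1 - / INR (S (S n))).
  { induction n. rewrite sum_O. simpl. field. rewrite sum_Sn, IHn. unfold plus; simpl. ring. }
  unfold is_series. eapply filterlim_ext. intros n; symmetry; apply E.
  change (is_lim_seq (fun n => 1 - / INR (S (S n))) 1).
  replace (Finite 1) with (Rbar_minus 1 0) by (simpl; f_equal; ring).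
  apply is_lim_seq_minus'. apply is_lim_seq_const.
  replace (Finite 0) with (Rbar_inv p_infty) by reflexivity.
  apply is_lim_seq_inv. 2: discriminate.
  eapply is_lim_seq_ext. 2: apply (proj1 (is_lim_seq_incr_n INR 2 p_infty) is_lim_seq_INR). intros n. simpl. rewrite (Nat.add_comm n 2). reflexivity.
Qed.

Lemma inv_sq_series : ex_series (fun m => / INR (S m) ^ 2).
Proof. apply (@ex_series_le R_AbsRing R_CompleteNormedModule _ (fun k => 2 * (/ INR (S k) - / INR (S (S k))))).
  intros n. assert (0 < INR (S n)) by (apply lt_0_INR; lia). rewrite (S_INR (S n)).
  change (norm (/ INR (S n) ^ 2)) with (Rabs (/ INR (S n) ^ 2)). rewrite Rabs_right.
  2: { apply Rle_ge. left; apply Rinv_0_lt_compat. nra. }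
  apply (Rmult_le_reg_r (INR (S n) ^ 2 * (INR (S n) + 1))). nra.
  replace (/ INR (S n) ^ 2 * (INR (S n) ^ 2 * (INR (S n) + 1))) with (INR (S n) + 1) by (field; lra).
  replace (2 * (/ INR (S n) - / (INR (S n) + 1)) * (INR (S n) ^ 2 * (INR (S n) + 1))) with (2 * INR (S n)) by (field; lra).
  assert (1 <= INR (S n)) by (apply (le_INR 1); lia). lra.
  exists (2 * 1). apply (@is_series_scal_l R_AbsRing R_NormedModule 2 _ 1 tele_series). Qed.

Lemma stirling K : INR K ^ K <= exp (INR K) * Fr K.
Proof. induction K. simpl. unfold Fr; simpl. rewrite exp_0. lra.
  assert (Hk : (INR K + 1) ^ K <= exp 1 * INR K ^ K).
  { destruct K. simpl. assert (H := exp_ineq1_le 1). lra.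
    assert (0 < INR (S K)) by (apply lt_0_INR; lia).
    replace ((INR (S K) + 1) ^ S K) with (INR (S K) ^ S K * (1 + / INR (S K)) ^ S K).
    2:{ rewrite <- Rpow_mult_distr. f_equal. field. lra. }
    rewrite Rmult_comm. apply Rmult_le_compat_r. apply pow_le; lra. apply pow_1k_le_e; lia. }
  rewrite S_INR. simpl pow. rewrite Fr_S, S_INR, exp_plus.
  assert (0 <= INR K) by apply pos_INR. assert (0 < exp 1) by apply exp_pos.
  assert (0 <= exp (INR K) * Fr K) by (assert (HF := Fr_pos K); assert (HE := exp_pos (INR K)); nra).
  assert (0 <= INR K ^ K) by (apply pow_le; lra).
  apply Rle_trans with ((INR K + 1) * (exp 1 * INR K ^ K)). apply Rmult_le_compat_l; lra.
  apply Rle_trans with ((INR K + 1) * (exp 1 * (exp (INR K) * Fr K))).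
  apply Rmult_le_compat_l. lra. apply Rmult_le_compat_l; lra. right; ring. Qed.

Lemma rprod_sq p K : rprod (fun m => (p / INR (S m)) ^ 2) K = (p ^ K / Fr K) ^ 2.
Proof. induction K. simpl. unfold Fr; simpl. field.
  change (rprod (fun m => (p / INR (S m)) ^ 2) (S K)) with (rprod (fun m => (p / INR (S m)) ^ 2) K * (p / INR (S K)) ^ 2).
  rewrite IHK, Fr_S. assert (H := Fr_pos K). assert (0 < INR (S K)) by (apply lt_0_INR; lia).
  set (q := INR (S K)) in *. simpl pow. field. split; lra. Qed.

Lemma tail_sum n N : rsum (fun i => / INR (n + 2 + i) ^ 2) N <= / INR (S n) - / INR (S n + N).
Proof. induction N. simpl. rewrite Nat.add_0_r. lra.
  change (rsum (fun i => / INR (n + 2 + i) ^ 2) (S N)) with (rsum (fun i => / INR (n + 2 + i) ^ 2) N + / INR (n + 2 + N) ^ 2).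
  eapply Rle_trans. apply Rplus_le_compat_r. apply IHN.
  assert (0 < INR (S n + N)) by (apply lt_0_INR; lia).
  replace (INR (n + 2 + N)) with (INR (S n + N) + 1) by (rewrite <- S_INR; f_equal; lia).
  replace (INR (S n + S N)) with (INR (S n + N) + 1) by (rewrite <- S_INR; f_equal; lia).
  set (v := INR (S n + N)) in *.
  cut (/ (v + 1) ^ 2 <= / v - / (v + 1)). lra.
  apply (Rmult_le_reg_r (v * (v + 1) ^ 2)). apply Rmult_lt_0_compat; [lra| apply pow_lt; lra].
  replace (/ (v + 1) ^ 2 * (v * (v + 1) ^ 2)) with v by (field; lra).
  replace ((/ v - / (v + 1)) * (v * (v + 1) ^ 2)) with (v + 1) by (field; lra). lra. Qed.

Lemma mono1 rho R e : 0 <= rho <= R -> R < 1 -> 0 <= e -> (rho + e) / (1 - rho) <= (R + e) / (1 - R).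
Proof. intros H1 H2 H3. apply (Rmult_le_reg_r ((1 - rho) * (1 - R))). nra.
  replace ((rho + e) / (1 - rho) * ((1 - rho) * (1 - R))) with ((rho + e) * (1 - R)) by (field; lra).
  replace ((R + e) / (1 - R) * ((1 - rho) * (1 - R))) with ((R + e) * (1 - rho)) by (field; lra). nra. Qed.

Lemma RP_one d : Rpower 1 d = 1.
Proof. unfold Rpower. rewrite ln_1, Rmult_0_r, exp_0. auto. Qed.

Section P2.
Variables (a : nat -> R) (lam : nat -> C) (d : R) (N0 N1 N2 L : nat) (eps : R).
Definition th2 := Rpower 2 (d - 2).
Definition kap2 := ln th2.
Definition dL := / Rpower (INR L) d.
Hypothesis Ha : forall n, 0 < a n.
Hypothesis Hdec : forall n m, (n < m)%nat -> a m < a n.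
Hypothesis Hd : 2 < d.
Hypothesis Hdecr : forall i j, (N0 <= i)%nat -> (i <= j)%nat -> pow_seq d a j <= pow_seq d a i.
Hypothesis HN02 : (N0 <= N2)%nat.
Hypothesis HN12 : (N1 <= N2)%nat.
Hypothesis Hlam : forall m, (N1 <= m)%nat -> Cmod (lam m) <= eps * a m.
Hypothesis Heps : 0 < eps.
Hypothesis HL : (4 <= L)%nat.
Hypothesis HL144 : 144 <= Rpower (INR L) (d - 2).
Hypothesis Heps1 : eps <= dL.
Hypothesis Heps2 : eps * INR L ^ 2 <= exp (- kap2 / 2) - / th2.
Hypothesis Heps3 : eps * INR L ^ 2 <= kap2 / 16.

Definition Kn n := (S n / L)%nat.
Definition sn n := (S n / 2)%nat.
Definition Tm m := (a 0 + Cmod (lam m)) / (a m - a (S m)).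
Definition gam m := if (m <? N2)%nat then Tm m else 4 * dL.
Definition gfun n m := if (m <? n)%nat then (if (m <? sn n)%nat then - kap2 / 2 else kap2 / 16)
  else if (m =? n)%nat then 0 else eps * (INR (S n) / INR (S m)) ^ 2.
Definition cc n m := if (m <? Kn n)%nat then gam m * (INR (S n) / INR (S m)) ^ 2 else exp (gfun n m).

Lemma Hinj2 : forall n m, n <> m -> a n <> a m.
Proof. intros n m H E. destruct (Nat.lt_ge_cases n m). specialize (Hdec n m H0); lra.
  assert (m < n)%nat by lia. specialize (Hdec m n H1); lra. Qed.

Lemma ratio_le i j : (N0 <= i)%nat -> (i <= j)%nat -> a j / a i <= Rpower (INR (S i) / INR (S j)) d.
Proof. intros H1 H2. assert (H := Hdecr i j H1 H2). unfold pow_seq in H.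
  assert (0 < INR (S i)) by (apply lt_0_INR; lia). assert (0 < INR (S j)) by (apply lt_0_INR; lia).
  rewrite RP_div by auto. assert (Hi := Ha i). assert (Hj := Ha j).
  assert (P1 := RP_pos (INR (S i)) d). assert (P2 := RP_pos (INR (S j)) d).
  apply Rmult_le_reg_r with (Rpower (INR (S j)) d * a i). nra.
  replace (Rpower (INR (S i)) d / Rpower (INR (S j)) d * (Rpower (INR (S j)) d * a i)) with (Rpower (INR (S i)) d * a i) by (field; lra).
  replace (a j / a i * (Rpower (INR (S j)) d * a i)) with (Rpower (INR (S j)) d * a j) by (field; lra). auto. Qed.

Lemma th2_gt1 : 1 < th2.
Proof. unfold th2, Rpower. rewrite <- exp_0. apply exp_increasing.
  assert (0 < ln 2). { rewrite <- ln_1. apply ln_increasing; lra. } nra. Qed.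

Lemma kap2_pos : 0 < kap2.
Proof. unfold kap2. rewrite <- ln_1. apply ln_increasing. lra. apply th2_gt1. Qed.

Lemma RL_ge : 144 * INR L ^ 2 <= Rpower (INR L) d.
Proof. assert (0 < INR L) by (apply lt_0_INR; lia). rewrite RP_split by auto. nra. Qed.

Lemma dL_small : 0 < dL <= / 144.
Proof. assert (H := RL_ge). assert (4 <= INR L) by (replace 4 with (INR 4) by (simpl; ring); apply le_INR; lia). unfold dL. split.
  apply Rinv_0_lt_compat; apply RP_pos. apply Rinv_le_contravar. lra. nra. Qed.

Lemma hW_ge_x2 n m : (m < n)%nat -> (INR (S m) / INR (S n)) ^ 2 <= hW n m.
Proof. intros H. rewrite hW_lt by auto.
  assert (Hp : 0 < INR (S n)) by (apply lt_0_INR; lia). assert (Hq : 0 < INR (S m)) by (apply lt_0_INR; lia).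
  assert (Hx : 0 < INR (S m) / INR (S n) < 1). { split. apply Rdiv_lt_0_compat; auto.
      apply (Rmult_lt_reg_r (INR (S n))); auto. unfold Rdiv; rewrite Rmult_assoc, Rinv_l by lra. rewrite Rmult_1_l, Rmult_1_r. apply lt_INR; lia. }
  set (x := INR (S m) / INR (S n)) in *. assert (0 < x ^ 2 < 1) by (split; nra).
  apply (Rmult_le_reg_r (1 - x ^ 2)). lra. unfold Rdiv. rewrite Rmult_assoc, Rinv_l by lra. nra. Qed.

Lemma fac2 n m : (N2 <= Kn n)%nat -> (1 <= Kn n)%nat -> Cmod (kfactor a lam n m) <= hW n m * cc n m.
Proof. intros HK1 HK2.
  assert (HLn : L <> 0%nat) by lia.
  destruct (divfacts (S n) L HLn) as [D1 D2]. fold (Kn n) in D1, D2. set (K := Kn n) in *.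
  destruct (divfacts (S n) 2 ltac:(lia)) as [S1 S2]. fold (sn n) in S1, S2. set (s := sn n) in *.
  assert (HKn : (K <= n)%nat) by nia.
  assert (Hp : 0 < INR (S n)) by (apply lt_0_INR; lia). assert (Hq : 0 < INR (S m)) by (apply lt_0_INR; lia).
  assert (Han := Ha n). assert (Ham := Ha m). assert (HLr : 4 <= INR L) by (replace 4 with (INR 4) by (simpl; ring); apply le_INR; lia).
  assert (HdL := dL_small). assert (Hk := kap2_pos). assert (Hth := th2_gt1).
  destruct (Nat.eq_dec m n) as [->|Hmn].
  { rewrite kf_eq, Cmod_1. unfold hW, cc, gfun. fold K s. destruct (Nat.eq_dec n n); [|lia].
    destruct (n <? K)%nat eqn:E. apply Nat.ltb_lt in E; lia. destruct (n <? n)%nat eqn:E2. apply Nat.ltb_lt in E2; lia.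
    rewrite Nat.eqb_refl, exp_0. lra. }
  eapply Rle_trans. apply (kf_le a lam Ha Hinj2 n m Hmn).
  destruct (Nat.lt_ge_cases m n) as [Hlt|Hge].
  - assert (Hamn := Hdec _ _ Hlt). rewrite Rabs_left by lra.
    replace (- (a n - a m)) with (a m - a n) by ring.
    set (x := INR (S m) / INR (S n)).
    assert (Hx : 0 < x < 1). { unfold x; split. apply Rdiv_lt_0_compat; auto.
      apply (Rmult_lt_reg_r (INR (S n))); auto. unfold Rdiv; rewrite Rmult_assoc, Rinv_l by lra. rewrite Rmult_1_l, Rmult_1_r. apply lt_INR; lia. }
    unfold cc. fold K. destruct (m <? K)%nat eqn:EK.
    + apply Nat.ltb_lt in EK.
      assert (Hh := hW_ge_x2 n m Hlt). fold x in Hh.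
      assert (Hinvx : (INR (S n) / INR (S m)) ^ 2 = / x ^ 2) by (unfold x; field; lra).
      rewrite Hinvx.
      assert (Hg : (a n + Cmod (lam m)) / (a m - a n) <= gam m).
      { unfold gam. destruct (m <? N2)%nat eqn:EN.
        - unfold Tm. assert (Ham1 : a n <= a (S m)). { destruct (Nat.eq_dec (S m) n). rewrite e; apply Rle_refl. left; apply Hdec; lia. }
          assert (Ham2 : a (S m) < a m) by (apply Hdec; lia).
          assert (a n <= a 0%nat). { destruct n. lra. left; apply Hdec; lia. }
          assert (0 <= Cmod (lam m)) by apply Cmod_ge_0.
          apply Rle_trans with ((a 0%nat + Cmod (lam m)) / (a m - a n)).
          apply Rmult_le_compat_r. left; apply Rinv_0_lt_compat; lra. lra.
          apply Rmult_le_compat_l. lra. apply Rinv_le_contravar; lra.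
        - apply Nat.ltb_ge in EN.
          assert (Hl := Hlam m ltac:(lia)).
          set (rho := a n / a m).
          assert (Hrho : rho <= dL).
          { eapply Rle_trans. apply ratio_le; lia. fold x.
            apply Rle_trans with (Rpower (/ INR L) d). apply RP_mono_pos. 2: lra. split. lra.
            apply (Rmult_le_reg_r (INR (S n))); auto. unfold x, Rdiv. rewrite Rmult_assoc, Rinv_l by lra.
            apply (Rmult_le_reg_l (INR L)). lra. rewrite Rmult_1_r, <- Rmult_assoc, Rinv_r by lra. rewrite Rmult_1_l.
            rewrite <- mult_INR. apply le_INR. nia.
            unfold dL. replace (/ INR L) with (1 / INR L) by (field; lra). rewrite RP_div by lra. rewrite RP_one. lra. }
          assert (Hrho0 : 0 < rho) by (apply Rdiv_lt_0_compat; auto).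
          replace ((a n + Cmod (lam m)) / (a m - a n)) with ((rho + Cmod (lam m) / a m) / (1 - rho)) by (unfold rho; field; lra).
          assert (Cmod (lam m) / a m <= eps). { apply (Rmult_le_reg_r (a m)); auto. unfold Rdiv; rewrite Rmult_assoc, Rinv_l; lra. }
          assert (0 <= Cmod (lam m) / a m) by (apply Rdiv_le_0_compat; [apply Cmod_ge_0|lra]).
          apply (Rmult_le_reg_r (1 - rho)). lra. unfold Rdiv. rewrite Rmult_assoc, Rinv_l by lra. nra. }
      assert (0 <= gam m) by (eapply Rle_trans; [|apply Hg]; apply Rdiv_le_0_compat; [assert (0 <= Cmod (lam m)) by apply Cmod_ge_0; lra|lra]).
      eapply Rle_trans. apply Hg.
      assert (0 < x ^ 2) by nra.
      replace (gam m) with (x ^ 2 * (gam m * / x ^ 2)) at 1 by (field; lra).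
      apply Rmult_le_compat_r. apply Rmult_le_pos; auto. left; apply Rinv_0_lt_compat; auto. auto.
    + apply Nat.ltb_ge in EK. unfold gfun. fold s. assert (E2 : (m <? n)%nat = true) by (apply Nat.ltb_lt; auto). rewrite E2.
      assert (Hl := Hlam m ltac:(lia)).
      set (rho := a n / a m). set (u := Rpower x (d - 2)).
      assert (Hu : 0 < u <= 1) by (split; [apply RP_pos|apply RP_le1; lra]).
      assert (Hrho : rho <= x ^ 2 * u). { unfold u. rewrite <- RP_split by lra. unfold rho, x. apply ratio_le; lia. }
      assert (Hrho0 : 0 < rho) by (apply Rdiv_lt_0_compat; auto).
      assert (Hel : Cmod (lam m) / a m <= eps). { apply (Rmult_le_reg_r (a m)); auto. unfold Rdiv; rewrite Rmult_assoc, Rinv_l; lra. }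
      assert (0 <= Cmod (lam m) / a m) by (apply Rdiv_le_0_compat; [apply Cmod_ge_0|lra]).
      replace ((a n + Cmod (lam m)) / (a m - a n)) with ((rho + Cmod (lam m) / a m) / (1 - rho)) by (unfold rho; field; lra).
      assert (Hx2 : 0 < x ^ 2 < 1) by (split; nra).
      assert (Hx2u : x ^ 2 * u < 1) by nra.
      apply Rle_trans with ((x ^ 2 * u + eps) / (1 - x ^ 2 * u)).
      { apply Rle_trans with ((rho + eps) / (1 - rho)).
        { apply Rmult_le_compat_r. left; apply Rinv_0_lt_compat; lra. lra. }
        apply mono1; try split; lra. }
      apply Rle_trans with ((x ^ 2 * u + eps) / (1 - x ^ 2)).
      { apply Rmult_le_compat_l. nra. apply Rinv_le_contravar; nra. }
      rewrite hW_lt by auto. fold x.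
      assert (Hxl : / INR L <= x).
      { unfold x. apply (Rmult_le_reg_r (INR (S n))); auto. unfold Rdiv. rewrite Rmult_assoc, Rinv_l by lra.
        apply (Rmult_le_reg_l (INR L)). lra. rewrite Rmult_1_r, <- Rmult_assoc, Rinv_r by lra. rewrite Rmult_1_l.
        rewrite <- mult_INR. apply le_INR. nia. }
      assert (Hex : eps / x ^ 2 <= eps * INR L ^ 2).
      { apply (Rmult_le_reg_r (x ^ 2)). lra. unfold Rdiv. rewrite Rmult_assoc, Rinv_l by lra.
        assert (1 <= INR L * x). { apply (Rmult_le_compat_l (INR L)) in Hxl. rewrite Rinv_r in Hxl; lra. lra. }
        assert (1 <= (INR L * x) ^ 2) by nra. rewrite Rpow_mult_distr in H1. nra. }
      assert (Hg : u + eps / x ^ 2 <= exp (if (m <? s)%nat then - kap2 / 2 else kap2 / 16)).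
      { destruct (m <? s)%nat eqn:Es.
        - apply Nat.ltb_lt in Es. assert (Hu2 : u <= / th2).
          { unfold u, th2. replace (/ Rpower 2 (d - 2)) with (Rpower (/ 2) (d - 2)).
            apply RP_mono_pos. split. lra. unfold x. apply (Rmult_le_reg_r (INR (S n))); auto. unfold Rdiv. rewrite Rmult_assoc, Rinv_l by lra.
            assert (INR (S m) * 2 <= INR (S n)). { replace 2 with (INR 2) by (simpl; ring). rewrite <- mult_INR. apply le_INR. lia. } lra. lra.
            replace (/ 2) with (1 / 2) by field. rewrite RP_div, RP_one by lra. field. apply Rgt_not_eq, RP_pos. }
          lra.
        - assert (H1 := exp_ineq1_le (kap2 / 16)). lra. }
      apply Rle_trans with (x ^ 2 / (1 - x ^ 2) * (u + eps / x ^ 2)).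
      { right. field. lra. }
      apply Rmult_le_compat_l. apply Rdiv_le_0_compat; lra. auto.
  - assert (Hgt : (n < m)%nat) by lia. assert (Hamn := Hdec _ _ Hgt). rewrite Rabs_right by lra.
    unfold cc. fold K. destruct (m <? K)%nat eqn:EK. apply Nat.ltb_lt in EK; lia.
    unfold gfun. destruct (m <? n)%nat eqn:E2. apply Nat.ltb_lt in E2; lia.
    destruct (m =? n)%nat eqn:E3. apply Nat.eqb_eq in E3; lia.
    rewrite hW_gt by auto. set (z := INR (S n) / INR (S m)).
    assert (Hz : 0 < z < 1). { unfold z; split. apply Rdiv_lt_0_compat; auto.
      apply (Rmult_lt_reg_r (INR (S m))); auto. unfold Rdiv; rewrite Rmult_assoc, Rinv_l by lra. rewrite Rmult_1_l, Rmult_1_r. apply lt_INR; lia. }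
    set (r := a m / a n).
    assert (Hr : r <= z ^ 2). { unfold r. eapply Rle_trans. apply ratio_le; lia. fold z. rewrite (RP_split z d) by lra.
      assert (Rpower z (d - 2) <= 1) by (apply RP_le1; lra). nra. }
    assert (Hr0 : 0 < r) by (apply Rdiv_lt_0_compat; auto).
    assert (Hl := Hlam m ltac:(lia)).
    apply Rle_trans with ((1 + eps * r) / (1 - r)).
    { replace ((1 + eps * r) / (1 - r)) with ((a n + eps * a m) / (a n - a m)) by (unfold r; field; lra).
      apply Rmult_le_compat_r. left; apply Rinv_0_lt_compat; lra. lra. }
    assert (Hz2 : 0 < z ^ 2 < 1) by (split; nra). assert (Hr1 : 0 < 1 - r) by lra.
    apply Rle_trans with ((1 + eps * z ^ 2) / (1 - z ^ 2)).
    { apply (Rmult_le_reg_r ((1 - r) * (1 - z ^ 2))). apply Rmult_lt_0_compat; lra.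
      replace ((1 + eps * r) / (1 - r) * ((1 - r) * (1 - z ^ 2))) with ((1 + eps * r) * (1 - z ^ 2)) by (field; nra).
      replace ((1 + eps * z ^ 2) / (1 - z ^ 2) * ((1 - r) * (1 - z ^ 2))) with ((1 + eps * z ^ 2) * (1 - r)) by (field; nra).
      nra. }
    replace ((1 + eps * z ^ 2) / (1 - z ^ 2)) with (1 / (1 - z ^ 2) * (1 + eps * z ^ 2)) by (field; nra).
    apply Rmult_le_compat_l. apply Rdiv_le_0_compat; nra. apply exp_ineq1_le.
Qed.

Hypothesis Heps4 : eps <= kap2 / 64.

Definition CS := rprod Tm N2 * (4 * INR L ^ 2 * exp 1 ^ 2) ^ N2.

Lemma Tm_pos m : 0 < Tm m.
Proof. unfold Tm. apply Rdiv_lt_0_compat. assert (0 <= Cmod (lam m)) by apply Cmod_ge_0. assert (H0 := Ha 0%nat). lra.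
  assert (H := Hdec m (S m) ltac:(lia)). lra. Qed.

Lemma cc_nonneg n m : 0 <= cc n m.
Proof. unfold cc. destruct (m <? Kn n)%nat. apply Rmult_le_pos. unfold gam. destruct (m <? N2)%nat.
  left; apply Tm_pos. assert (H := dL_small). lra. apply pow2_ge_0. left; apply exp_pos. Qed.

Lemma partA n : (N2 <= Kn n)%nat -> (1 <= Kn n)%nat -> rprod (cc n) (Kn n) <= CS.
Proof. intros HK1 HK2.
  assert (HLn : L <> 0%nat) by lia.
  destruct (divfacts (S n) L HLn) as [D1 D2]. fold (Kn n) in D1, D2. set (K := Kn n) in *.
  set (p := INR (S n)). assert (Hp : 0 < p) by (apply lt_0_INR; lia).
  assert (HLr : 4 <= INR L) by (replace 4 with (INR 4) by (simpl; ring); apply le_INR; lia).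
  rewrite (rprod_ext _ (fun m => gam m * (p / INR (S m)) ^ 2)).
  2:{ intros m Hm. unfold cc. fold K. destruct (m <? K)%nat eqn:E; auto. apply Nat.ltb_ge in E; lia. }
  rewrite rprod_mult, rprod_sq.
  replace K with (N2 + (K - N2))%nat at 1 by lia. rewrite rprod_split.
  rewrite (rprod_ext _ (fun _ => 4 * dL) (K - N2)).
  2:{ intros i Hi. unfold gam. destruct (N2 + i <? N2)%nat eqn:E; auto. apply Nat.ltb_lt in E; lia. }
  rewrite (rprod_ext gam Tm N2).
  2:{ intros i Hi. unfold gam. destruct (i <? N2)%nat eqn:E; auto. apply Nat.ltb_ge in E; lia. }
  rewrite rprod_const.
  assert (HKr : 1 <= INR K) by (apply (le_INR 1); lia).
  assert (HpK : p <= 2 * INR L * INR K).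
  { unfold p. replace 2 with (INR 2) by (simpl; ring). rewrite <- !mult_INR. apply le_INR. nia. }
  assert (HF := Fr_pos K). assert (Hst := stirling K). replace (exp (INR K)) with (exp 1 ^ K) in Hst by (rewrite exp_pow; f_equal; ring).
  assert (Hpow : p ^ K / Fr K <= (2 * INR L * exp 1) ^ K).
  { apply (Rmult_le_reg_r (Fr K)); auto. unfold Rdiv. rewrite Rmult_assoc, Rinv_l, Rmult_1_r by lra.
    apply Rle_trans with ((2 * INR L * INR K) ^ K). apply pow_incr; lra.
    rewrite !Rpow_mult_distr. 
    assert (0 <= (2 ^ K * INR L ^ K)) by (apply Rmult_le_pos; apply pow_le; lra).
    replace ((2 ^ K * INR L ^ K * exp 1 ^ K) * Fr K) with ((2 ^ K * INR L ^ K) * (exp 1 ^ K * Fr K)) by ring.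
    apply Rmult_le_compat_l; auto. }
  assert (Hpow2 : (p ^ K / Fr K) ^ 2 <= ((2 * INR L * exp 1) ^ K) ^ 2).
  { apply pow_incr. split; auto. apply Rdiv_le_0_compat; auto. apply pow_le; lra. }
  assert (HdL := dL_small). assert (HT := rprod_pos Tm N2 (fun m _ => Tm_pos m)).
  assert (HQ : 4 * dL * (4 * INR L ^ 2 * exp 1 ^ 2) <= 1).
  { assert (H := RL_ge). unfold dL. assert (He := exp_le_3). assert (He0 := exp_pos 1).
    assert (HR := RP_pos (INR L) d).
    apply (Rmult_le_reg_r (Rpower (INR L) d)); auto.
    replace (4 * / Rpower (INR L) d * (4 * INR L ^ 2 * exp 1 ^ 2) * Rpower (INR L) d) with (16 * INR L ^ 2 * exp 1 ^ 2) by (field; lra).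
    assert (exp 1 ^ 2 <= 9) by nra. nra. }
  unfold CS.
  set (Q := 4 * INR L ^ 2 * exp 1 ^ 2) in *. assert (HQ0 : 0 < Q) by (unfold Q; assert (0 < exp 1) by apply exp_pos; assert (0 < INR L) by lra; apply Rmult_lt_0_compat; [apply Rmult_lt_0_compat; [lra|apply pow_lt; lra]|apply pow_lt; lra]).
  assert (Hp1 : (4 * dL) ^ (K - N2) * Q ^ (K - N2) <= 1).
  { rewrite <- Rpow_mult_distr. rewrite <- (pow1 (K - N2)). apply pow_incr. split. apply Rmult_le_pos; lra. auto. }
  assert (0 <= (4 * dL) ^ (K - N2)) by (apply pow_le; lra).
  assert (0 < Q ^ N2) by (apply pow_lt; auto).
  assert (0 <= (p ^ K / Fr K) ^ 2) by apply pow2_ge_0.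
  apply Rle_trans with (rprod Tm N2 * (4 * dL) ^ (K - N2) * (Q ^ (K - N2) * Q ^ N2)).
  apply Rmult_le_compat_l. apply Rmult_le_pos; lra. eapply Rle_trans. apply Hpow2. right. unfold Q.
  rewrite <- pow_add. replace (K - N2 + N2)%nat with K by lia. rewrite <- pow_mult, Nat.mul_comm, pow_mult. f_equal. ring.
  replace (rprod Tm N2 * (4 * dL) ^ (K - N2) * (Q ^ (K - N2) * Q ^ N2)) with (rprod Tm N2 * Q ^ N2 * ((4 * dL) ^ (K - N2) * Q ^ (K - N2))) by ring.
  apply Rle_trans with (rprod Tm N2 * Q ^ N2 * 1). apply Rmult_le_compat_l; [apply Rmult_le_pos; lra|auto]. lra. Qed.

Lemma exp_le_mono x y : x <= y -> exp x <= exp y.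
Proof. intros H. destruct (Rle_lt_or_eq_dec _ _ H). left; apply exp_increasing; auto. subst; lra. Qed.

Lemma rsum_ext f g N : (forall m, (m < N)%nat -> f m = g m) -> rsum f N = rsum g N.
Proof. induction N; simpl; intros H; auto. rewrite IHN, H; auto. Qed.

Lemma rsum_scal c f N : rsum (fun m => c * f m) N = c * rsum f N.
Proof. induction N; simpl. ring. rewrite IHN; ring. Qed.

Lemma partB n M : (N2 <= Kn n)%nat -> (1 <= Kn n)%nat -> (S n <= M)%nat ->
  rprod (fun i => cc n (Kn n + i)) (M - Kn n) <= exp (kap2 / 4 - 5 * kap2 * INR (S n) / 64).
Proof. intros HK1 HK2 HM.
  assert (HLn : L <> 0%nat) by lia.
  destruct (divfacts (S n) L HLn) as [D1 D2]. fold (Kn n) in D1, D2. set (K := Kn n) in *.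
  destruct (divfacts (S n) 2 ltac:(lia)) as [S1 S2]. fold (sn n) in S1, S2. set (s := sn n) in *.
  assert (HKs : (K <= s)%nat) by nia. assert (Hsn : (s <= n)%nat) by nia.
  set (p := INR (S n)). assert (Hp : 0 < p) by (apply lt_0_INR; lia).
  assert (Hk := kap2_pos).
  rewrite (rprod_ext _ (fun i => exp (gfun n (K + i)))).
  2:{ intros i Hi. unfold cc. fold K. destruct (K + i <? K)%nat eqn:E; auto. apply Nat.ltb_lt in E; lia. }
  rewrite rprod_exp. apply exp_le_mono.
  replace (M - K)%nat with ((s - K) + ((n - s) + (1 + (M - S n))))%nat by lia.
  rewrite !rsum_split.
  rewrite (rsum_ext _ (fun _ => - kap2 / 2) (s - K)).
  2:{ intros i Hi. unfold gfun. fold s. destruct (K + i <? n)%nat eqn:E. 2:{ apply Nat.ltb_ge in E; lia. }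
      destruct (K + i <? s)%nat eqn:E2; auto. apply Nat.ltb_ge in E2; lia. }
  rewrite (rsum_ext _ (fun _ => kap2 / 16) (n - s)).
  2:{ intros i Hi. unfold gfun. fold s. destruct (K + (s - K + i) <? n)%nat eqn:E. 2:{ apply Nat.ltb_ge in E; lia. }
      destruct (K + (s - K + i) <? s)%nat eqn:E2; auto. apply Nat.ltb_lt in E2; lia. }
  rewrite (rsum_ext _ (fun i => eps * p ^ 2 * / INR (n + 2 + i) ^ 2) (M - S n)).
  2:{ intros i Hi. unfold gfun. replace (K + (s - K + (n - s + (1 + i))))%nat with (S n + i)%nat by lia.
      destruct (S n + i <? n)%nat eqn:E. apply Nat.ltb_lt in E; lia. destruct (S n + i =? n)%nat eqn:E2. apply Nat.eqb_eq in E2; lia.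
      replace (S (S n + i)) with (n + 2 + i)%nat by lia. fold p.
      assert (0 < INR (n + 2 + i)) by (apply lt_0_INR; lia). field. lra. }
  simpl (rsum _ 1). unfold gfun at 1. replace (K + (s - K + (n - s + 0)))%nat with n by lia.
  rewrite Nat.ltb_irrefl, Nat.eqb_refl.
  rewrite !rsum_const, rsum_scal.
  assert (Ht := tail_sum n (M - S n)). fold p in Ht.
  assert (0 < INR (S n + (M - S n))) by (apply lt_0_INR; lia).
  assert (Hinv : 0 < / INR (S n + (M - S n))) by (apply Rinv_0_lt_compat; auto).
  assert (Htail : eps * p ^ 2 * rsum (fun i => / INR (n + 2 + i) ^ 2) (M - S n) <= eps * p).
  { apply Rle_trans with (eps * p ^ 2 * / p). apply Rmult_le_compat_l. nra. lra.
    right. field. lra. }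
  rewrite !minus_INR by lia.
  assert (Hsr : p <= 2 * INR s + 1). { unfold p. replace 2 with (INR 2) by (simpl; ring). rewrite <- mult_INR. rewrite <- S_INR. apply le_INR. lia. }
  assert (HKr : 4 * INR K <= p). { assert (INR (L * K) <= p) by (apply le_INR; auto). rewrite mult_INR in H0.
    assert (4 <= INR L) by (replace 4 with (INR 4) by (simpl; ring); apply le_INR; lia). assert (0 <= INR K) by apply pos_INR. nra. }
  assert (Hnr : INR n = p - 1) by (unfold p; rewrite S_INR; ring).
  rewrite Hnr. nra. Qed.

Lemma Pbound n P : (N2 <= Kn n)%nat -> (1 <= Kn n)%nat -> cseq_lim (cprod (kfactor a lam n)) P ->
  Cmod P <= 2 * CS * exp (kap2 / 4 - 5 * kap2 * INR (S n) / 64).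
Proof. intros HK1 HK2 HP. apply (cseq_lim_le _ _ _ HP). exists (S n). intros M HM.
  assert (HLn : L <> 0%nat) by lia.
  destruct (divfacts (S n) L HLn) as [D1 D2]. fold (Kn n) in D1, D2.
  assert (HKn : (Kn n <= n)%nat) by nia.
  rewrite Cmod_cprod. eapply Rle_trans. apply (rprod_le _ (fun m => hW n m * cc n m)).
  { intros m _. split. apply Cmod_ge_0. apply fac2; auto. }
  rewrite rprod_mult.
  assert (HW := W_le2 n M ltac:(lia)).
  replace M with (Kn n + (M - Kn n))%nat at 2 by lia. rewrite rprod_split.
  assert (HA := partA n HK1 HK2). assert (HB := partB n M HK1 HK2 HM).
  assert (0 <= rprod (cc n) (Kn n)) by (apply rprod_nonneg; intros; apply cc_nonneg).
  assert (0 <= rprod (fun i => cc n (Kn n + i)) (M - Kn n)) by (apply rprod_nonneg; intros; apply cc_nonneg).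
  assert (0 <= rprod (hW n) M) by (apply rprod_nonneg; intros; apply hW_nonneg).
  assert (0 < exp (kap2 / 4 - 5 * kap2 * INR (S n) / 64)) by apply exp_pos.
  replace (2 * CS * exp (kap2 / 4 - 5 * kap2 * INR (S n) / 64)) with (2 * (CS * exp (kap2 / 4 - 5 * kap2 * INR (S n) / 64))) by ring.
  apply Rmult_le_compat; auto. apply Rmult_le_pos; auto. apply Rmult_le_compat; auto. Qed.

Lemma Pexists n : exists P, cseq_lim (cprod (kfactor a lam n)) P.
Proof. apply cprod_conv.
  set (Nb := Nat.max N2 (S n)).
  set (gp := a n - a (S n)). assert (Hgp : 0 < gp) by (unfold gp; assert (H := Hdec n (S n) ltac:(lia)); lra).
  set (c0 := pow_seq d a N0). assert (Hc0 : 0 < c0) by (unfold c0, pow_seq; apply Rmult_lt_0_compat; [apply RP_pos|apply Ha]).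
  apply (proj2 (ex_series_incr_n _ Nb)).
  apply (@ex_series_le R_AbsRing R_CompleteNormedModule _ (fun k => (2 * c0 / gp) * / INR (S (Nb + k)) ^ 2)).
  - intros k. change (norm (Cmod (kfactor a lam n (Nb + k) - 1))) with (Rabs (Cmod (kfactor a lam n (Nb + k) - 1))).
    rewrite Rabs_right by (apply Rle_ge, Cmod_ge_0). set (m := (Nb + k)%nat).
    assert (Hm1 : (n < m)%nat) by (unfold m, Nb; lia). assert (Hm2 : (N2 <= m)%nat) by (unfold m, Nb; lia).
    eapply Rle_trans. apply (kf_m1 a lam Ha Hinj2 n m). lia.
    assert (Hamn := Hdec _ _ Hm1). rewrite Rabs_right by lra.
    assert (Hl := Hlam m ltac:(lia)). assert (HdL := dL_small). assert (Ham := Ha m).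
    assert (Hgap : gp <= a n - a m). { unfold gp. destruct (Nat.eq_dec m (S n)). rewrite e; lra. assert (H := Hdec (S n) m ltac:(lia)). lra. }
    assert (Ham2 : a m <= c0 / INR (S m) ^ 2).
    { assert (H := Hdecr N0 m ltac:(lia) ltac:(lia)). fold c0 in H. unfold pow_seq in H.
      assert (Hq : 0 < INR (S m)) by (apply lt_0_INR; lia). rewrite RP_split in H by lra.
      assert (H1 : 1 <= Rpower (INR (S m)) (d - 2)).
      { unfold Rpower. rewrite <- exp_0. apply exp_le_mono. assert (0 <= ln (INR (S m))) by (apply ln_ge0; apply (le_INR 1); lia). nra. }
      apply (Rmult_le_reg_r (INR (S m) ^ 2)). nra. unfold Rdiv. rewrite Rmult_assoc, Rinv_l by nra. nra. }
    apply Rle_trans with (2 * a m / gp).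
    { apply Rle_trans with ((a m + Cmod (lam m)) / gp).
      apply Rmult_le_compat_l. assert (0 <= Cmod (lam m)) by apply Cmod_ge_0; lra. apply Rinv_le_contravar; lra.
      apply Rmult_le_compat_r. left; apply Rinv_0_lt_compat; lra. nra. }
    unfold Rdiv. replace (2 * c0 * / gp * / INR (S m) ^ 2) with (2 * (c0 * / INR (S m) ^ 2) * / gp) by ring.
    apply Rmult_le_compat_r. left; apply Rinv_0_lt_compat; lra. lra.
  - apply (@ex_series_scal_l R_AbsRing R_NormedModule (2 * c0 / gp) (fun k => / INR (S (Nb + k)) ^ 2)).
    apply (proj1 (ex_series_incr_n (fun k => / INR (S k) ^ 2) Nb)). apply inv_sq_series.
Qed.
End P2.

Lemma part2 (a : nat -> R) (b : nat -> C) : std_a a -> (forall n, b n <> 0%C) ->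
  ((exists d, d > 2 /\ eventually_decr (pow_seq d a)) ->
   (forall eps, 0 < eps -> exists N, forall n, (N <= n)%nat ->
        Rabs (ln (a n / Cmod (b n))) <= eps * INR (S n)) ->
   forall lam : nat -> C, in_cH lam ->
     cseq_lim (fun n => (lam n / RtoC (a n))%C) 0 ->
     exists k : nat -> C, (forall n, k_is a b lam n (k n)) /\
       ex_series (fun n => Cmod (k n))).
Proof.
  intros [Ha [Hdec _]] Hbnz [d [Hd [N0 Hdecr]]] Hln lam [Hl0 Hre] Hrat.
  assert (Hd' : 2 < d) by lra.
  assert (Hk := kap2_pos d Hd'). set (kap := kap2 d) in *. set (th := th2 d).
  assert (Hth : 1 < th) by (apply th2_gt1; auto).
  assert (Ethk : th = exp kap) by (unfold kap, kap2; fold th; rewrite exp_ln; lra).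
  destruct (INR_unbounded (exp (ln 144 / (d - 2)))) as [L0 HL0].
  set (L := Nat.max 4 L0).
  assert (HL : (4 <= L)%nat) by (unfold L; lia).
  assert (HL144 : 144 <= Rpower (INR L) (d - 2)).
  { apply Rle_trans with (Rpower (exp (ln 144 / (d - 2))) (d - 2)).
    unfold Rpower at 1. rewrite ln_exp. replace ((d - 2) * (ln 144 / (d - 2))) with (ln 144) by (field; lra).
    rewrite exp_ln; lra.
    apply RP_mono_pos. split. apply exp_pos. left. eapply Rlt_le_trans. apply HL0. apply le_INR. unfold L; lia. lra. }
  assert (HLr : 4 <= INR L) by (replace 4 with (INR 4) by (simpl; ring); apply le_INR; lia).
  assert (HL2 : 0 < INR L ^ 2) by (apply pow_lt; lra).
  assert (Hgap : 0 < exp (- kap / 2) - / th).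
  { rewrite Ethk, <- exp_Ropp. assert (exp (- kap) < exp (- kap / 2)) by (apply exp_increasing; lra). lra. }
  assert (HdL : 0 < dL d L) by (unfold dL; apply Rinv_0_lt_compat, RP_pos).
  set (eps := Rmin (Rmin (dL d L) ((exp (- kap / 2) - / th) / INR L ^ 2)) (Rmin (kap / 16 / INR L ^ 2) (kap / 64))).
  assert (Heps : 0 < eps).
  { unfold eps. repeat apply Rmin_glb_lt; try apply Rdiv_lt_0_compat; lra. }
  assert (Heps1 : eps <= dL d L) by (unfold eps; eapply Rle_trans; [apply Rmin_l|apply Rmin_l]).
  assert (Heps2 : eps * INR L ^ 2 <= exp (- kap2 d / 2) - / th2 d).
  { fold kap th. assert (eps <= (exp (- kap / 2) - / th) / INR L ^ 2) by (unfold eps; eapply Rle_trans; [apply Rmin_l|apply Rmin_r]).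
    apply (Rmult_le_compat_r (INR L ^ 2)) in H; [|lra]. unfold Rdiv in H. rewrite Rmult_assoc, Rinv_l in H; lra. }
  assert (Heps3 : eps * INR L ^ 2 <= kap2 d / 16).
  { fold kap. assert (eps <= kap / 16 / INR L ^ 2) by (unfold eps; eapply Rle_trans; [apply Rmin_r|apply Rmin_l]).
    apply (Rmult_le_compat_r (INR L ^ 2)) in H; [|lra]. unfold Rdiv in H. rewrite Rmult_assoc, Rinv_l in H; lra. }
  assert (Heps4 : eps <= kap2 d / 64) by (fold kap; unfold eps; eapply Rle_trans; [apply Rmin_r|apply Rmin_r]).
  assert (HlimC := is_lim_Cmod _ _ Hrat). rewrite Cmod_0 in HlimC.
  apply is_lim_seq_spec in HlimC. destruct (HlimC (mkposreal eps Heps)) as [N1 HN1].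
  assert (Hlam : forall m, (N1 <= m)%nat -> Cmod (lam m) <= eps * a m).
  { intros m Hm. specialize (HN1 m Hm). simpl in HN1. rewrite Rminus_0_r, Rabs_right in HN1 by (apply Rle_ge, Cmod_ge_0).
    rewrite Cmod_div_R in HN1 by auto. assert (Ham := Ha m).
    apply (Rmult_lt_compat_r (a m)) in HN1; auto. unfold Rdiv in HN1. rewrite Rmult_assoc, Rinv_l in HN1; lra. }
  set (N2 := Nat.max N0 N1). assert (HN02 : (N0 <= N2)%nat) by (unfold N2; lia). assert (HN12 : (N1 <= N2)%nat) by (unfold N2; lia).
  destruct (Hln (kap / 64) ltac:(lra)) as [N3 HN3].
  set (Ns := Nat.max N3 (L * (N2 + 1))).
  assert (Hdecr' : forall i j, (N0 <= i)%nat -> (i <= j)%nat -> pow_seq d a j <= pow_seq d a i) by exact Hdecr.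
  assert (Pex := Pexists a lam d N0 N1 N2 L eps Ha Hdec Hd' Hdecr' HN02 HN12 Hlam HL HL144 Heps1).
  set (Pf := fun n => proj1_sig (constructive_indefinite_description _ (Pex n))).
  assert (HPf : forall n, cseq_lim (cprod (kfactor a lam n)) (Pf n)) by (intros n; unfold Pf; apply proj2_sig).
  exists (fun n => (- ((RtoC (a n) - lam n) / b n) * Pf n)%C). split.
  { intros n. exists (Pf n). split; auto. }
  set (q := exp (- kap / 16)). assert (Hq : 0 < q < 1).
  { split. apply exp_pos. unfold q. rewrite <- exp_0. apply exp_increasing. lra. }
  set (CS0 := CS a lam N2 L). 
  assert (HCS : 0 <= CS0).
  { unfold CS0, CS. apply Rmult_le_pos. apply rprod_nonneg. intros m _. left. apply (Tm_pos a lam N0 N1 N2 L Ha Hdec HN02 HN12 HL).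
    apply pow_le. assert (0 < exp 1) by apply exp_pos. nra. }
  apply (proj2 (ex_series_incr_n _ Ns)).
  apply (@ex_series_le R_AbsRing R_CompleteNormedModule _ (fun j => (4 * CS0 * exp (kap / 4)) * q ^ (S (Ns + j)))).
  - intros j. change (norm (Cmod (- ((RtoC (a (Ns + j)%nat) - lam (Ns + j)%nat) / b (Ns + j)%nat) * Pf (Ns + j)%nat)%C))
      with (Rabs (Cmod (- ((RtoC (a (Ns + j)%nat) - lam (Ns + j)%nat) / b (Ns + j)%nat) * Pf (Ns + j)%nat)%C)).
    rewrite Rabs_right by (apply Rle_ge, Cmod_ge_0).
    set (n := (Ns + j)%nat).
    rewrite (Cmod_kis a b lam n _ (Pf n) (Hbnz n) eq_refl).
    assert (HnN3 : (N3 <= n)%nat) by (unfold n, Ns; lia).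
    assert (HnL : (L * (N2 + 1) <= S n)%nat) by (unfold n, Ns; lia).
    assert (HK1 : (N2 + 1 <= Kn L n)%nat) by (unfold Kn; apply Nat.div_le_lower_bound; lia).
    assert (HP := Pbound a lam d N0 N1 N2 L eps Ha Hdec Hd' Hdecr' HN02 HN12 Hlam Heps HL HL144 Heps1 Heps2 Heps3 Heps4 n (Pf n) ltac:(lia) ltac:(lia) (HPf n)).
    fold kap CS0 in HP.
    assert (Han := Ha n). assert (HbP : 0 < Cmod (b n)).
    { assert (0 <= Cmod (b n)) by apply Cmod_ge_0. destruct H. auto. exfalso. apply (Hbnz n). apply Cmod_eq_0. auto. }
    assert (Hpre : Cmod (RtoC (a n) - lam n) <= 2 * a n).
    { unfold Cminus. eapply Rle_trans. apply Cmod_triangle. rewrite Cmod_opp, Cmod_R, Rabs_right by lra.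
      assert (HN2n : (N2 <= n)%nat) by nia. assert (Hl := Hlam n ltac:(lia)). assert (HdL2 := dL_small d N0 N1 N2 L HN02 HN12 HL HL144).
      assert (eps <= 1) by lra. nra. }
    assert (Hab : a n / Cmod (b n) <= exp (kap / 64 * INR (S n))).
    { specialize (HN3 n HnN3). assert (Hpos : 0 < a n / Cmod (b n)) by (apply Rdiv_lt_0_compat; auto).
      rewrite <- (exp_ln (a n / Cmod (b n))) by auto. apply exp_le_mono.
      eapply Rle_trans. apply Rle_abs. auto. }
    assert (HPpos : 0 <= Cmod (Pf n)) by apply Cmod_ge_0.
    apply Rle_trans with (2 * (a n / Cmod (b n)) * Cmod (Pf n)).
    { apply Rmult_le_compat_r; auto. unfold Rdiv. rewrite <- Rmult_assoc. apply Rmult_le_compat_r.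
      left; apply Rinv_0_lt_compat; auto. auto. }
    apply Rle_trans with (2 * exp (kap / 64 * INR (S n)) * (2 * CS0 * exp (kap / 4 - 5 * kap * INR (S n) / 64))).
    { apply Rmult_le_compat; auto. assert (0 <= a n / Cmod (b n)) by (apply Rdiv_le_0_compat; lra). lra. lra. }
    right. unfold q. rewrite exp_pow.
    replace (2 * exp (kap / 64 * INR (S n)) * (2 * CS0 * exp (kap / 4 - 5 * kap * INR (S n) / 64)))
      with (4 * CS0 * (exp (kap / 64 * INR (S n)) * exp (kap / 4 - 5 * kap * INR (S n) / 64))) by ring.
    rewrite <- exp_plus.
    replace (4 * CS0 * exp (kap / 4) * exp (INR (S n) * (- kap / 16))) with (4 * CS0 * (exp (kap / 4) * exp (INR (S n) * (- kap / 16)))) by ring.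
    rewrite <- exp_plus. f_equal. f_equal. field.
  - apply (@ex_series_scal_l R_AbsRing R_NormedModule (4 * CS0 * exp (kap / 4)) (fun j => q ^ S (Ns + j))).
    apply (proj1 (ex_series_incr_n (fun k => q ^ S k) Ns)).
    apply (proj1 (ex_series_incr_1 (fun k => q ^ k))). apply ex_series_geom. rewrite Rabs_right; lra.
Qed.


Theorem theorem3 (X : seq_space) (a : nat -> R) (b : nat -> C) :
  valid_space X -> std_a a -> in_space X b -> (forall n, b n <> 0%C) ->
  ((exists d, d < 2 /\ eventually_incr (pow_seq d a)) ->
     ~ (exists lam : nat -> C, in_cH lam /\
          exists k : nat -> C, (forall n, k_is a b lam n (k n)) /\ cbounded k))
  /\
  ((exists d, d > 2 /\ eventually_decr (pow_seq d a)) ->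
   (forall eps, 0 < eps -> exists N, forall n, (N <= n)%nat ->
        Rabs (ln (a n / Cmod (b n))) <= eps * INR (S n)) ->
   forall lam : nat -> C, in_cH lam ->
     cseq_lim (fun n => (lam n / RtoC (a n))%C) 0 ->
     exists k : nat -> C, (forall n, k_is a b lam n (k n)) /\
       ex_series (fun n => Cmod (k n))).
Proof.
  intros HX Ha Hb Hbnz. split.
  - intros Hex. apply part1; auto. apply (b_bounded X b HX Hb).
  - intros Hex Hln lam Hl Hr. apply (part2 a b Ha Hbnz Hex Hln lam Hl Hr).
Qed.
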